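(* Let $\omega$ be uniformly distributed on $\{0,1\}^{[n]}$. For $\lambda\in(0,1)$ let $\ell_\lambda:=\lfloor n^\lambda\rfloor$, $m_\lambda:=\lfloor n/\ell_\lambda\rfloor$, partition the first $m_\lambda\ell_\lambda$ coordinates into consecutive blocks of length $\ell_\lambda$, let $S_j$ be the sum of coordinates in the $j$th block, and $S^\lambda:=\max_{1\le j\le m_\lambda}S_j$. For $\lambda,\beta\in(0,1)$ define $$s_{\lambda,\beta}:=\frac{\ell_\lambda}{2}+\frac{\sqrt{\ell_\lambda}}{2}\sqrt{2(1-\lambda)\log n-\log\log n-2\log\Big(\sqrt{4\pi(1-\lambda)}\,\log\beta^{-1}\Big)}.$$ Then for every $\lambda,\beta\in(0,1)$, $\mathbb{P}(S^\lambda\le s_{\lambda,\beta})\to\beta$ as $n\to\infty$. *)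

(* Defs.v *)
From Stdlib Require Import Reals.
From mathcomp Require Import ssreflect ssrfun ssrbool eqtype ssrnat seq choice div fintype finfun bigop finset.
Unset Printing Implicit Defensive.

Definition ell (lam : R) (n : nat) : nat :=
  Z.to_nat (Int_part (Rpower (INR n) lam)).

Definition mblk (lam : R) (n : nat) : nat := (n %/ ell lam n)%N.

(* S_j : sum of the coordinates in the j-th block (0-indexed j),
   i.e. coordinates i with j*ell <= i < (j+1)*ell *)
Definition block_sum (lam : R) (n : nat) (w : {ffun 'I_n -> bool}) (j : nat) : nat :=
  (\sum_(i < n | (j * ell lam n <= i < j.+1 * ell lam n)%N) (w i : nat))%N.

Definition Smax (lam : R) (n : nat) (w : {ffun 'I_n -> bool}) : nat :=
  (\max_(j < mblk lam n) block_sum lam n w j)%N.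

Local Open Scope R_scope.

Definition s_thr (lam beta : R) (n : nat) : R :=
  (INR (ell lam n) / 2 + sqrt (INR (ell lam n)) / 2 *
    sqrt (2 * (1 - lam) * ln (INR n) - ln (ln (INR n))
          - 2 * ln (sqrt (4 * PI * (1 - lam)) * ln (/ beta))))%R.

Definition prob_event (lam beta : R) (n : nat) : R :=
  (INR #|[set w : {ffun 'I_n -> bool} | if Rle_dec (INR (Smax lam n w)) (s_thr lam beta n) then true else false]|
   / 2 ^ n)%R.

(* Main.v *)
Require Import Defs.
From Stdlib Require Import Reals.
From Stdlib Require Import Lra Lia ZArith.
From Coquelicot Require Import Coquelicot.
From mathcomp Require Import ssreflect ssrfun ssrbool eqtype ssrnat seq choice div fintype finfun bigop finset.
From mathcomp Require Import binomial.
From mathcomp Require Import zify.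

Set Implicit Arguments. Unset Strict Implicit. Unset Printing Implicit Defensive.
Open Scope nat_scope.

Fixpoint allb (n : nat) : seq (seq bool) :=
  if n is n'.+1 then [seq true :: s | s <- allb n'] ++ [seq false :: s | s <- allb n']
  else [:: [::]].

Lemma size_allb n : size (allb n) = 2 ^ n.
Proof. elim: n => [|n IH] //=. by rewrite size_cat !size_map IH expnS mul2n addnn. Qed.

Lemma cons_inj (b : bool) : injective (cons b).
Proof. by move=> x y [].  Qed.

Lemma mem_allb n s : (s \in allb n) = (size s == n).
Proof.
elim: n s => [|n IH] s; first by case: s.
case: s => [|b s] /=.
  by rewrite mem_cat; apply/negbTE; rewrite negb_or; apply/andP; split; apply/mapP => -[].
rewrite mem_cat. case: b.
- rewrite (mem_map (@cons_inj true)) IH.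
  have -> : (true :: s \in [seq false :: s0 | s0 <- allb n]) = false.
    by apply/negbTE/mapP => -[x _].
  by rewrite orbF.
- rewrite (mem_map (@cons_inj false)) IH.
  have -> : (false :: s \in [seq true :: s0 | s0 <- allb n]) = false.
    by apply/negbTE/mapP => -[x _].
  done.
Qed.

Lemma uniq_allb n : uniq (allb n).
Proof.
elim: n => [|n IH] //=.
rewrite cat_uniq !map_inj_uniq ?IH //=; try by move=> x y [].
rewrite andbT. apply/hasPn => x /mapP [y _ ->]. by apply/mapP => -[z _].
Qed.

Lemma count_split a b (P1 P2 : pred (seq bool)) :
  count (fun s => P1 (take a s) && P2 (drop a s)) (allb (a + b)) =
  count P1 (allb a) * count P2 (allb b).
Proof.
elim: a P1 => [|a IH] P1 /=.
  rewrite add0n addn0.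
  rewrite (eq_count (a2 := fun s => P1 [::] && P2 s)); last by move=> s; rewrite take0 drop0.
  case: (P1 [::]) => /=; last by rewrite count_pred0.
  by rewrite mul1n.
rewrite !count_cat !count_map mulnDl.
rewrite -(IH (fun s => P1 (true :: s))) -(IH (fun s => P1 (false :: s))).
done.
Qed.

Definition blocksP (l m : nat) (Q : pred (seq bool)) (s : seq bool) : bool :=
  all (fun j => Q (take l (drop (j * l) s))) (iota 0 m).

Lemma count_blocks l m r Q :
  count (blocksP l m Q) (allb (m * l + r)) = (count Q (allb l)) ^ m * 2 ^ r.
Proof.
elim: m => [|m IH].
  rewrite mul0n add0n expn0 mul1n.
  rewrite (eq_count (a2 := predT)); first by rewrite count_predT size_allb.
  by move=> s; rewrite /blocksP.
rewrite mulSn -addnA.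
have H : blocksP l m.+1 Q =1 (fun s => Q (take l s) && blocksP l m Q (drop l s)).
  move=> s. rewrite /blocksP /= mul0n drop0. congr andb.
  rewrite -(addn0 1) iotaDl all_map. apply: eq_all => j /=.
  by rewrite drop_drop add1n mulSn addnC.
by rewrite (eq_count H) count_split IH expnS mulnA.
Qed.

Definition Gw n (w : {ffun 'I_n -> bool}) : seq bool := [seq w i | i <- enum 'I_n].

Lemma size_Gw n (w : {ffun 'I_n -> bool}) : size (Gw w) = n.
Proof. by rewrite /Gw size_map size_enum_ord. Qed.

Lemma nth_Gw n (w : {ffun 'I_n -> bool}) (i : 'I_n) : nth false (Gw w) i = w i.
Proof. by rewrite /Gw (nth_map i) ?size_enum_ord // nth_ord_enum. Qed.

Lemma Gw_inj n : injective (@Gw n).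
Proof.
move=> w1 w2 e. apply/ffunP => i. by rewrite -!nth_Gw e.
Qed.

Lemma Gw_onto n (s : seq bool) : size s = n -> Gw [ffun i : 'I_n => nth false s i] = s.
Proof.
move=> hs. rewrite /Gw.
have -> : [seq [ffun i : 'I_n => nth false s i] i | i <- enum 'I_n] = [seq nth false s i | i <- [seq val i | i <- enum 'I_n]].
  rewrite -map_comp. apply: eq_map => i /=. by rewrite ffunE.
by rewrite val_enum_ord -hs -/(mkseq _ _) mkseq_nth.
Qed.

Lemma card_G n (P : pred (seq bool)) :
  #|[set w : {ffun 'I_n -> bool} | P (Gw w)]| = count P (allb n).
Proof.
rewrite cardE -(size_map (@Gw n)) -size_filter.
apply: perm_size. apply: uniq_perm.
- rewrite map_inj_uniq; [exact: enum_uniq | exact: Gw_inj].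
- apply: filter_uniq. exact: uniq_allb.
move=> s. rewrite mem_filter mem_allb.
apply/mapP/andP.
- move=> [w]. rewrite mem_enum inE => hw ->. by rewrite hw size_Gw.
- move=> [hP /eqP hs]. exists [ffun i : 'I_n => nth false s i]; last by rewrite Gw_onto.
  by rewrite mem_enum inE Gw_onto.
Qed.

Lemma sum_nth_take (s : seq bool) d l : d + l <= size s ->
  \sum_(d <= i < d + l) (nth false s i : nat) = count id (take l (drop d s)).
Proof.
elim: l => [|l IH] h.
  by rewrite addn0 big_geq // take0.
rewrite addnS big_nat_recr /=; last by lia.
rewrite IH; last by lia.
rewrite (take_nth false); last by rewrite size_drop; lia.
by rewrite -cats1 count_cat nth_drop /= addn0.
Qed.

Lemma block_sum_G (l n j : nat) (w : {ffun 'I_n -> bool}) : j.+1 * l <= n ->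
  \sum_(i < n | (j * l <= i < j.+1 * l)) (w i : nat) = count id (take l (drop (j * l) (Gw w))).
Proof.
move=> h.
rewrite -sum_nth_take; last by rewrite size_Gw; lia.
rewrite (big_nat_widen (j * l) (j * l + l) n); last by lia.
rewrite (big_nat_widenl (j * l) 0 n); last by lia.
rewrite big_mkord. apply: congr_big => // [i|i _].
  by rewrite /= mulSn (addnC l); case: (j * l <= i); rewrite ?andbT ?andbF.
by rewrite nth_Gw.
Qed.

Lemma count_sum_bin l (R : pred nat) :
  count (fun v => R (count id v)) (allb l) = \sum_(0 <= k < l.+1) R k * 'C(l, k).
Proof.
elim: l R => [|l IH] R.
  by rewrite /= big_nat1 bin0 muln1 addn0.
rewrite /= count_cat !count_map.
rewrite (eq_count (a2 := fun v => (fun k => R k.+1) (count id v))); last by move=> v.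
rewrite (eq_count (a1 := preim _ _) (a2 := fun v => R (count id v))); last by move=> v.
rewrite !IH.
rewrite [in RHS]big_nat_recl // bin0.
have E : \sum_(0 <= i < l.+1) R i.+1 * 'C(l.+1, i.+1) = \sum_(0 <= i < l.+1) R i.+1 * 'C(l, i.+1) + \sum_(0 <= i < l.+1) R i.+1 * 'C(l, i).
  by rewrite -big_split; apply: eq_bigr => k _; rewrite binS mulnDr.
rewrite E addnA.
rewrite addnC. congr addn.
  have E2 : \sum_(0 <= k < l.+2) R k * 'C(l, k) = R 0 * 1 + \sum_(0 <= i < l.+1) R i.+1 * 'C(l, i.+1).
    by rewrite big_nat_recl // bin0.
  have E3 : \sum_(0 <= k < l.+2) R k * 'C(l, k) = \sum_(0 <= k < l.+1) R k * 'C(l, k).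
    by rewrite big_nat_recr //= bin_small // muln0 addn0.
  by rewrite -E2 E3.
exact: (IH (fun k => R k.+1)).
Qed.

Unset Implicit Arguments. Set Strict Implicit.

Open Scope R_scope.

Definition Wl (n : nat) : R := RInt (fun x => sin x ^ n) 0 (PI/2).

Lemma Wl_ex n a b : ex_RInt (fun x => sin x ^ n) a b.
Proof.
apply: ex_RInt_continuous => z _.
apply: ex_derive_continuous; auto_derive; auto.
Qed.

Lemma Wl_rec n : INR n.+2 * Wl n.+2 = INR n.+1 * Wl n.
Proof.
have H : is_RInt (fun x => INR n.+2 * sin x ^ n.+2 - INR n.+1 * sin x ^ n) 0 (PI/2)
   (minus ((fun x => - cos x * sin x ^ n.+1) (PI/2)) ((fun x => - cos x * sin x ^ n.+1) 0)).
  apply: (is_RInt_derive (fun x => - cos x * sin x ^ n.+1)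
     (fun x => INR n.+2 * sin x ^ n.+2 - INR n.+1 * sin x ^ n)) => x _.
    have -> : INR n.+2 * sin x ^ n.+2 - INR n.+1 * sin x ^ n =
       (- (- sin x * sin x ^ n.+1 + cos x * (INR n.+1 * cos x * sin x ^ n))).
      have e : cos x * cos x = 1 - sin x * sin x.
        have := sin2_cos2 x. rewrite /Rsqr => h. lra.
      rewrite (_ : cos x * (INR n.+1 * cos x * sin x ^ n) = INR n.+1 * (cos x * cos x) * sin x ^ n); last ring.
      rewrite e (S_INR n.+1) /=. ring.
    auto_derive; auto. simpl. ring.
  apply: ex_derive_continuous; auto_derive; auto.
have H1 : is_RInt (fun x => INR n.+2 * sin x ^ n.+2 - INR n.+1 * sin x ^ n) 0 (PI/2)
   (INR n.+2 * Wl n.+2 - INR n.+1 * Wl n).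
  apply: (is_RInt_minus (fun x => INR n.+2 * sin x ^ n.+2) (fun x => INR n.+1 * sin x ^ n)).
  apply: (is_RInt_scal (fun x => sin x ^ n.+2)). apply: RInt_correct. apply: Wl_ex.
  apply: (is_RInt_scal (fun x => sin x ^ n)). apply: RInt_correct. apply: Wl_ex.
have E1 := is_RInt_unique _ _ _ _ H. rewrite (is_RInt_unique _ _ _ _ H1) in E1.
move: E1. rewrite cos_PI2 cos_0 sin_0 /minus /plus /opp /=. lra.
Qed.

Lemma Wl0 : Wl 0 = PI/2.
Proof.
rewrite /Wl /=. rewrite RInt_const /scal /= /mult /=. ring.
Qed.

Lemma Wl1 : Wl 1 = 1.
Proof.
have H : is_RInt (fun x => sin x ^ 1) 0 (PI/2) (minus ((fun x => - cos x) (PI/2)) ((fun x => - cos x) 0)).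
  apply: (is_RInt_derive (fun x => - cos x) (fun x => sin x ^ 1)) => x _.
    auto_derive; auto. ring.
  apply: ex_derive_continuous; auto_derive; auto.
rewrite /Wl (is_RInt_unique _ _ _ _ H) cos_PI2 cos_0 /minus /plus /opp /=. ring.
Qed.

Lemma Wl_mono n : Wl n.+1 <= Wl n.
Proof.
apply: RInt_le; try apply: Wl_ex.
  have := PI_RGT_0; lra.
move=> x Hx.
have h1 : 0 <= sin x. apply: sin_ge_0; have := PI_RGT_0; lra.
have h2 : sin x <= 1 by have := SIN_bound x; lra.
rewrite /=. have h3 : 0 <= sin x ^ n by apply: pow_le.
nra.
Qed.

Lemma Wl_pos n : 0 < Wl n /\ 0 < Wl n.+1.
Proof.
elim: n => [|n [IH1 IH2]].
  rewrite Wl0 Wl1. have := PI_RGT_0; lra.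
split => //.
have := Wl_rec n.
have h : 0 < INR n.+2 by apply: lt_0_INR; lia.
have h' : 0 < INR n.+1 by apply: lt_0_INR; lia.
move=> e. have : Wl n.+2 = INR n.+1 * Wl n / INR n.+2 by rewrite -e; field; lra.
move=> ->. apply: Rdiv_lt_0_compat => //. nra.
Qed.

Lemma Wl_inv n : INR n.+1 * Wl n.+1 * Wl n = PI/2.
Proof.
elim: n => [|n IH].
  rewrite Wl0 Wl1 /=. ring.
rewrite -{}IH. have := Wl_rec n. move=> e.
rewrite e. ring.
Qed.

Definition cbin (h : nat) : R := INR 'C(h.*2, h) / 4 ^ h.

Lemma bin_step h : ('C(h.+1.*2, h.+1) * h.+1 * h.+1 = 'C(h.*2, h) * h.*2.+1 * h.*2.+2)%N.
Proof.
have e1 := mul_bin_diag (h.*2.+2) h.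
have e2 := mul_bin_diag (h.*2.+1) h.
have e3 : 'C(h.*2.+1, h) = 'C(h.*2.+1, h.+1).
  rewrite -bin_sub; last by lia.
  by have -> : (h.*2.+1 - h = h.+1)%N by lia.
rewrite /= in e1 e2.
have -> : h.+1.*2 = h.*2.+2 by rewrite doubleS.
rewrite e3 in e1.
set A := 'C(h.*2.+2, h.+1) in e1 *. set B := 'C(h.*2.+1, h.+1) in e1 e2 *.
set C := 'C(h.*2, h) in e2 *.
have -> : (A * h.+1 * h.+1 = (h.+1 * A) * h.+1)%N by rewrite (mulnC A).
rewrite -e1 -mulnA (mulnC B) -e2. nia.
Qed.

Lemma Wl_even h : Wl h.*2 = PI/2 * cbin h.
Proof.
elim: h => [|h IH].
  rewrite Wl0 /cbin (_ : 'C(0.*2, 0) = 1%N) //=. field.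
have e := Wl_rec h.*2.
have hb := bin_step h.
have hb' : INR 'C(h.+1.*2, h.+1) * INR h.+1 * INR h.+1 = INR 'C(h.*2, h) * INR h.*2.+1 * INR h.*2.+2.
  by have := f_equal INR hb; rewrite !mult_INR.
rewrite doubleS. 
have h1 : 0 < INR h.*2.+2 by apply: lt_0_INR; lia.
have -> : Wl h.*2.+2 = INR h.*2.+1 * Wl h.*2 / INR h.*2.+2 by rewrite -e; field; lra.
rewrite IH /cbin.
have hh : INR h.*2.+2 = 2 * INR h.+1 by rewrite -!mul2n !S_INR !mult_INR /=; ring.
have hp : 0 < INR h.+1 by apply: lt_0_INR; lia.
rewrite -doubleS.
have -> : INR 'C(h.+1.*2, h.+1) = INR 'C(h.*2, h) * INR h.*2.+1 * INR h.*2.+2 / (INR h.+1 * INR h.+1).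
  rewrite -hb'. field. lra.
rewrite hh -tech_pow_Rmult. have := pow_lt 4 h ltac:(lra) => ?. field. lra.
Qed.

Lemma cbin_bounds h : (1 <= h)%N ->
  2 / (PI * (2 * INR h + 1)) <= cbin h ^ 2 <= 1 / (PI * INR h).
Proof.
move=> h1.
have hpi := PI_RGT_0.
have hh : 1 <= INR h by apply: (le_INR 1); apply/leP.
have eW := Wl_even h.
have cW : cbin h = 2 / PI * Wl h.*2 by rewrite eW; field; lra.
have i1 := Wl_inv h.*2.
have i2 : INR h.*2 * Wl h.*2 * Wl (h.*2).-1 = PI/2.
  have := Wl_inv (h.*2).-1. have -> : (h.*2).-1.+1 = h.*2 by lia. done.
have m1 := Wl_mono h.*2.
have m2 : Wl h.*2 <= Wl (h.*2).-1.
  have := Wl_mono (h.*2).-1. have -> : (h.*2).-1.+1 = h.*2 by lia. done.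
have [p1 p2] := Wl_pos h.*2.
have d1 : INR h.*2.+1 = 2 * INR h + 1 by rewrite S_INR -mul2n mult_INR /=; ring.
have d2 : INR h.*2 = 2 * INR h by rewrite -mul2n mult_INR /=; ring.
rewrite d1 in i1. rewrite d2 in i2.
rewrite cW.
split.
- have : PI/2 <= (2 * INR h + 1) * Wl h.*2 * Wl h.*2 by rewrite -i1; nra.
  move=> hx.
  apply: (Rmult_le_reg_l (PI * (2 * INR h + 1))); first nra.
  have -> : PI * (2 * INR h + 1) * (2 / (PI * (2 * INR h + 1))) = 2 by field; lra.
  have -> : PI * (2 * INR h + 1) * (2 / PI * Wl h.*2) ^ 2 = 4 / PI * ((2 * INR h + 1) * Wl h.*2 * Wl h.*2) by field; lra.
  have : 0 < 4 / PI by apply: Rdiv_lt_0_compat; lra.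
  move=> h4. have := Rmult_le_compat_l _ _ _ (Rlt_le _ _ h4) hx.
  have -> : 4 / PI * (PI / 2) = 2 by field; lra. done.
- have : 2 * INR h * Wl h.*2 * Wl h.*2 <= PI/2 by rewrite -i2; nra.
  move=> hx.
  apply: (Rmult_le_reg_l (PI * INR h)); first nra.
  have -> : PI * INR h * (1 / (PI * INR h)) = 1 by field; lra.
  have -> : PI * INR h * (2 / PI * Wl h.*2) ^ 2 = 2 / PI * (2 * INR h * Wl h.*2 * Wl h.*2) by field; lra.
  have : 0 < 2 / PI by apply: Rdiv_lt_0_compat; lra.
  move=> h4. have := Rmult_le_compat_l _ _ _ (Rlt_le _ _ h4) hx.
  have -> : 2 / PI * (PI / 2) = 1 by field; lra. done.
Qed.

Lemma ln_le x y : 0 < x -> x <= y -> ln x <= ln y.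
Proof. move=> hx [h|->]; [left; exact: ln_increasing | lra]. Qed.

Lemma ln_le_sub1 x : 0 < x -> ln x <= x - 1.
Proof.
move=> hx. have := exp_ineq1_le (x - 1). move=> h.
have : ln x <= ln (exp (x - 1)) by apply: ln_le => //; lra.
by rewrite ln_exp.
Qed.

Lemma ln_diff u v : 0 < u -> 0 < v -> ln u - ln v <= (u - v) / v.
Proof.
move=> hu hv.
have e : ln u - ln v = ln (u / v).
  rewrite /Rdiv ln_mult //; last by apply: Rinv_0_lt_compat.
  rewrite ln_Rinv //; ring.
rewrite e. have := ln_le_sub1 (u / v) ltac:(apply: Rdiv_lt_0_compat => //).
move=> h. have -> : (u - v) / v = u / v - 1 by field; lra. done.
Qed.

Lemma ln_abs_bound u v : 0 < u -> 0 < v -> Rabs (ln u - ln v) <= Rabs (u - v) / Rmin u v.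
Proof.
move=> hu hv. have h1 := ln_diff u v hu hv. have h2 := ln_diff v u hv hu.
have hm : 0 < Rmin u v by apply: Rmin_glb_lt.
have hmu := Rmin_l u v. have hmv := Rmin_r u v.
apply: Rabs_le. split.
- have : (v - u) / u <= Rabs (u - v) / Rmin u v.
    apply: (Rle_trans _ (Rabs (u - v) / u)).
      apply: Rmult_le_compat_r; [left; apply: Rinv_0_lt_compat => // | rewrite Rabs_minus_sym; apply: RRle_abs].
    apply: Rmult_le_compat_l; first by apply: Rabs_pos.
    apply: Rinv_le_contravar => //.
  lra.
- apply: (Rle_trans _ _ _ h1).
  apply: (Rle_trans _ (Rabs (u - v) / v)).
    apply: Rmult_le_compat_r; [left; apply: Rinv_0_lt_compat => // | apply: RRle_abs].
  apply: Rmult_le_compat_l; first by apply: Rabs_pos.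
  apply: Rinv_le_contravar => //.
Qed.

Lemma ln_1m_lower y : 0 <= y <= 1/2 -> - y - 2 * y ^ 2 <= ln (1 - y).
Proof.
move=> hy. have := ln_diff 1 (1 - y) ltac:(lra) ltac:(lra). rewrite ln_1.
move=> h. have : (1 - (1 - y)) / (1 - y) <= y + 2 * y ^ 2.
  apply: (Rmult_le_reg_r (1 - y)); first lra.
  have -> : (1 - (1 - y)) / (1 - y) * (1 - y) = y by field; lra.
  nra.
lra.
Qed.

Lemma ln_1m_upper y : y < 1 -> ln (1 - y) <= - y.
Proof. move=> hy. have := ln_le_sub1 (1 - y) ltac:(lra). lra. Qed.

Lemma ln_1p_lower y : 0 <= y -> y - y ^ 2 <= ln (1 + y).
Proof.
move=> hy. have := ln_diff 1 (1 + y) ltac:(lra) ltac:(lra). rewrite ln_1.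
move=> h. have : y - y ^ 2 <= - ((1 - (1 + y)) / (1 + y)).
  have -> : - ((1 - (1 + y)) / (1 + y)) = y / (1 + y) by field; lra.
  apply: (Rmult_le_reg_r (1 + y)); first lra.
  have -> : y / (1 + y) * (1 + y) = y by field; lra.
  nra.
lra.
Qed.

Lemma ln_1p_upper y : -1 < y -> ln (1 + y) <= y.
Proof. move=> hy. have := ln_le_sub1 (1 + y) ltac:(lra). lra. Qed.

Definition gq (l k : nat) : R := 2 * (INR k - INR l / 2) ^ 2 / INR l.
Definition Fb (l k : nat) : R :=
  ln (INR 'C(l, k) / 2 ^ l) + gq l k + / 2 * ln (PI * INR l / 2).

Lemma binR_pos l k : (k <= l)%N -> 0 < INR 'C(l, k).
Proof. move=> h. apply: lt_0_INR. apply/ltP. by rewrite bin_gt0. Qed.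

Lemma binR_step l k : (k < l)%N ->
  INR 'C(l, k.+1) = INR 'C(l, k) * ((INR l - INR k) / (INR k + 1)).
Proof.
move=> h. have e := mul_bin_left l k.
have e' := f_equal INR e. rewrite !mult_INR minus_INR in e'; last by apply/leP; lia.
rewrite S_INR in e'. have hk : 0 < INR k + 1 by have := pos_INR k; lra.
apply: (Rmult_eq_reg_l (INR k + 1)); last lra.
rewrite e'. field. lra.
Qed.

Lemma step_bound l k : (0 < l)%N -> (l <= k.*2)%N -> (4 * k.+1 <= 3 * l)%N ->
  Rabs (Fb l k.+1 - Fb l k) <= 3 * ((2 * INR k + 2 - INR l) / INR l) ^ 2.
Proof.
move=> hl h1 h2.
have hL : 0 < INR l by apply: lt_0_INR; apply/ltP.
have hk1 : (k < l)%N by lia.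
have c1 := binR_pos l k ltac:(lia).
have hkl : INR k + 1 <= INR l.
  have := le_INR k.+1 l ltac:(apply/leP; lia). rewrite S_INR. lra.
have h1r : INR l <= 2 * INR k.
  have := le_INR l (k.*2) ltac:(apply/leP; lia). rewrite -mul2n mult_INR /=. lra.
have h2r : 4 * (INR k + 1) <= 3 * INR l.
  have := le_INR (4 * k.+1) (3 * l) ltac:(apply/leP; lia). rewrite !mult_INR !S_INR ?INR_0. lra.
set y1 := (2 * INR k - INR l) / INR l.
set y2 := (2 * INR k + 2 - INR l) / INR l.
have ey : (INR l - INR k) / (INR k + 1) = (1 - y1) / (1 + y2).
  rewrite /y1 /y2. field. lra.
have hy1 : 0 <= y1 <= 1/2.
  rewrite /y1; split; [apply: Rdiv_le_0_compat; lra|].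
  apply: (Rmult_le_reg_r (INR l)) => //. have -> : (2 * INR k - INR l) / INR l * INR l = 2 * INR k - INR l by field; lra. lra.
have hy2 : 0 <= y2 <= 1/2.
  rewrite /y2; split; [apply: Rdiv_le_0_compat; lra|].
  apply: (Rmult_le_reg_r (INR l)) => //. have -> : (2 * INR k + 2 - INR l) / INR l * INR l = 2 * INR k + 2 - INR l by field; lra. lra.
have hy12 : y1 <= y2.
  rewrite /y1 /y2. apply: Rmult_le_compat_r; [left; apply: Rinv_0_lt_compat => // | lra].
have eg : gq l k.+1 - gq l k = y1 + y2.
  rewrite /gq /y1 /y2 S_INR. field. lra.
have eF : Fb l k.+1 - Fb l k = ln (1 - y1) - ln (1 + y2) + (y1 + y2).
  rewrite /Fb -eg.
  have p2 : 0 < 2 ^ l by apply: pow_lt; lra.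
  rewrite (binR_step l k hk1) ey.
  have q1 : 0 < 1 - y1 by lra.
  have q2 : 0 < / (1 + y2) by apply: Rinv_0_lt_compat; lra.
  have q3 : 0 < / 2 ^ l by apply: Rinv_0_lt_compat; lra.
  rewrite /Rdiv.
  rewrite (Rmult_comm (INR 'C(l, k))) Rmult_assoc.
  rewrite ln_mult; last (apply: Rmult_lt_0_compat => //); last by apply: Rmult_lt_0_compat.
  rewrite ln_mult //. rewrite ln_Rinv; last lra. ring.
rewrite eF. apply: Rabs_le.
have a1 := ln_1m_lower y1 hy1. have a2 := ln_1m_upper y1 ltac:(lra).
have a3 := ln_1p_lower y2 ltac:(lra). have a4 := ln_1p_upper y2 ltac:(lra).
split; nra.
Qed.

Lemma walk l k d : (0 < l)%N -> (l <= k.*2)%N -> (4 * (k + d) <= 3 * l)%N ->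
  Rabs (Fb l (k + d) - Fb l k) <= 3 * INR d * ((2 * INR (k + d) - INR l) / INR l) ^ 2.
Proof.
move=> hl hk. elim: d => [|d IH] hd.
  rewrite addn0 Rminus_diag Rabs_R0 /=. lra.
have hL : 0 < INR l by apply: lt_0_INR; apply/ltP.
have IH' := IH ltac:(lia).
have st := step_bound l (k + d) hl ltac:(lia) ltac:(lia).
rewrite -addnS in st.
have e : Fb l (k + d.+1) - Fb l k = (Fb l (k + d.+1) - Fb l (k + d)) + (Fb l (k + d) - Fb l k) by ring.
rewrite e. apply: (Rle_trans _ _ _ (Rabs_triang _ _)).
have eY : (2 * INR (k + d) + 2 - INR l) / INR l = (2 * INR (k + d.+1) - INR l) / INR l.
  rewrite addnS S_INR. field. lra.
rewrite eY in st.
set Y0 := (2 * INR (k + d) - INR l) / INR l in IH'.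
set Y1 := (2 * INR (k + d.+1) - INR l) / INR l in st *.
have hY : 0 <= Y0 <= Y1.
  have hk' : INR l <= 2 * INR k.
    have := le_INR l (k.*2) ltac:(apply/leP; lia). rewrite -mul2n mult_INR /=. lra.
  have := pos_INR d. rewrite /Y0 /Y1 addnS S_INR plus_INR. move=> hd0. split.
    apply: Rdiv_le_0_compat; lra.
  apply: Rmult_le_compat_r; [left; apply: Rinv_0_lt_compat => // | lra].
have hY2 : Y0 ^ 2 <= Y1 ^ 2 by rewrite /=; nra.
rewrite S_INR. have := pos_INR d. move=> hd0. nra.
Qed.

Lemma ln_near1 a Z : 0 < a -> a <= Z <= 1 -> Rabs (ln Z) <= (1 - a) / a.
Proof.
move=> ha hZ. have h1 : ln Z <= 0 by rewrite -ln_1; apply: ln_le; lra.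
have h2 := ln_diff 1 Z ltac:(lra) ltac:(lra). rewrite ln_1 in h2.
have h3 : (1 - Z) / Z <= (1 - a) / a.
  apply: (Rle_trans _ ((1 - a) / Z)).
    apply: Rmult_le_compat_r; [left; apply: Rinv_0_lt_compat; lra | lra].
  apply: Rmult_le_compat_l; [lra | apply: Rinv_le_contravar; lra].
rewrite Rabs_left1 //. lra.
Qed.

Lemma Fb_half l k : (0 < l)%N -> (k <= l)%N ->
  Fb l k = / 2 * ln ((INR 'C(l, k) / 2 ^ l) ^ 2 * (PI * INR l / 2)) + gq l k.
Proof.
move=> hl hk.
have hL : 0 < INR l by apply: lt_0_INR; apply/ltP.
have c := binR_pos l k hk.
have p2 : 0 < 2 ^ l by apply: pow_lt; lra.
have hpi := PI_RGT_0.
have x1 : 0 < INR 'C(l, k) / 2 ^ l by apply: Rdiv_lt_0_compat.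
have x2 : 0 < PI * INR l / 2 by apply: Rdiv_lt_0_compat; nra.
rewrite /Fb ln_mult; [|by apply: pow_lt|by []].
rewrite ln_pow //. have -> : INR 2 = 2 by rewrite /=; lra. field.
Qed.

Lemma Fb_center l : (2 <= l)%N -> Rabs (Fb l (uphalf l)) <= 8 / INR l.
Proof.
move=> hl.
have hpi := PI_RGT_0.
have hL : 0 < INR l by apply: lt_0_INR; apply/ltP; lia.
have hlo := odd_double_half l.
set h := l./2 in hlo.
have hh : (1 <= h)%N by rewrite /h; lia.
have hH : 1 <= INR h by apply: (le_INR 1); apply/leP.
have cb := cbin_bounds h hh.
have p4 : 0 < 4 ^ h by apply: pow_lt; lra.
have cpos : 0 < cbin h by apply: Rdiv_lt_0_compat => //; apply: binR_pos; lia.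
rewrite uphalf_half.
rewrite Fb_half; [|lia|lia].
case ho: (odd l); rewrite ho /= in hlo *.
-
  have eL : INR l = 2 * INR h + 1.
    rewrite -hlo S_INR -mul2n mult_INR /=. ring.
  have eC : INR 'C(l, h.+1) / 2 ^ l = cbin h * ((2 * INR h + 1) / (2 * INR h + 2)).
    have e2 := mul_bin_diag (h.*2.+1) h. rewrite /= in e2.
    have e2' := f_equal INR e2. rewrite !mult_INR in e2'.
    rewrite -hlo. rewrite /cbin.
    have -> : (2 ^ (1 + h.*2) = 2 * 4 ^ h).
      rewrite -mul2n pow_add pow_mult (_ : 2 ^ 2 = 4); ring.
    have hb : INR 'C(h.*2.+1, h.+1) = INR h.*2.+1 * INR 'C(h.*2, h) / INR h.+1.
      rewrite e2'. field. have := pos_INR h. rewrite S_INR. lra.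
    rewrite add1n hb !S_INR -mul2n mult_INR /=. field. have := pos_INR h. lra.
  have eg : gq l h.+1 = / (2 * (2 * INR h + 1)).
    rewrite /gq eL S_INR. field. lra.
  rewrite eC eg eL.
  set c := cbin h in cb cpos *.
  set Z := (c * ((2 * INR h + 1) / (2 * INR h + 2))) ^ 2 * (PI * (2 * INR h + 1) / 2).
  have hZ : INR h / (INR h + 1) <= Z <= 1.
    have eZ : Z = c ^ 2 * (PI * (2 * INR h + 1) ^ 3 / (2 * (2 * INR h + 2) ^ 2)).
      rewrite /Z. field. lra.
    have hq : 0 < PI * (2 * INR h + 1) ^ 3 / (2 * (2 * INR h + 2) ^ 2).
      apply: Rdiv_lt_0_compat; [apply: Rmult_lt_0_compat => //; apply: pow_lt; lra | nra].
    rewrite eZ. split.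
    + apply: (Rle_trans _ (2 / (PI * (2 * INR h + 1)) * (PI * (2 * INR h + 1) ^ 3 / (2 * (2 * INR h + 2) ^ 2)))).
        have -> : 2 / (PI * (2 * INR h + 1)) * (PI * (2 * INR h + 1) ^ 3 / (2 * (2 * INR h + 2) ^ 2))
          = (2 * INR h + 1) ^ 2 / (2 * INR h + 2) ^ 2 by field; lra.
        apply: (Rmult_le_reg_r ((INR h + 1) * (2 * INR h + 2) ^ 2)); first nra.
        have -> : INR h / (INR h + 1) * ((INR h + 1) * (2 * INR h + 2) ^ 2) = INR h * (2 * INR h + 2) ^ 2 by field; lra.
        have -> : (2 * INR h + 1) ^ 2 / (2 * INR h + 2) ^ 2 * ((INR h + 1) * (2 * INR h + 2) ^ 2) = (2 * INR h + 1) ^ 2 * (INR h + 1) by field; lra.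
        nra.
      apply: Rmult_le_compat_r; [lra | lra].
    + apply: (Rle_trans _ (1 / (PI * INR h) * (PI * (2 * INR h + 1) ^ 3 / (2 * (2 * INR h + 2) ^ 2)))).
        apply: Rmult_le_compat_r; [lra | lra].
      have -> : 1 / (PI * INR h) * (PI * (2 * INR h + 1) ^ 3 / (2 * (2 * INR h + 2) ^ 2))
          = (2 * INR h + 1) ^ 3 / (2 * INR h * (2 * INR h + 2) ^ 2) by field; lra.
      apply: (Rmult_le_reg_r (2 * INR h * (2 * INR h + 2) ^ 2)); first nra.
      have -> : (2 * INR h + 1) ^ 3 / (2 * INR h * (2 * INR h + 2) ^ 2) * (2 * INR h * (2 * INR h + 2) ^ 2) = (2 * INR h + 1) ^ 3 by field; lra.
      nra.
  have hl1 := ln_near1 (INR h / (INR h + 1)) Z ltac:(apply: Rdiv_lt_0_compat; lra) hZ.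
  rewrite (_ : (1 - INR h / (INR h + 1)) / (INR h / (INR h + 1)) = / INR h) in hl1; last by field; lra.
  apply: (Rle_trans _ _ _ (Rabs_triang _ _)).
  rewrite Rabs_mult (Rabs_right (/ 2)); last lra.
  rewrite (Rabs_right (/ (2 * (2 * INR h + 1)))); last (left; apply: Rinv_0_lt_compat; lra).
  apply: (Rle_trans _ (/ 2 * / INR h + / (2 * (2 * INR h + 1)))).
    apply: Rplus_le_compat_r. apply: Rmult_le_compat_l; lra.
  apply: (Rmult_le_reg_r (2 * INR h * (2 * INR h + 1))); first nra.
  have -> : (/ 2 * / INR h + / (2 * (2 * INR h + 1))) * (2 * INR h * (2 * INR h + 1)) = 3 * INR h + 1 by field; lra.
  have -> : 8 / (2 * INR h + 1) * (2 * INR h * (2 * INR h + 1)) = 16 * INR h by field; lra.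
  lra.
-
  have eL : INR l = 2 * INR h.
    rewrite -hlo -mul2n mult_INR /=. ring.
  have eC : INR 'C(l, h) / 2 ^ l = cbin h.
    rewrite -hlo /cbin add0n. rewrite -mul2n pow_mult /=. by rewrite Rmult_1_r.
  have eg : gq l h = 0.
    rewrite /gq eL. field. lra.
  rewrite add0n eC eg eL Rplus_0_r.
  set c := cbin h in cb cpos *.
  have hZ : 2 * INR h / (2 * INR h + 1) <= c ^ 2 * (PI * (2 * INR h) / 2) <= 1.
    have -> : c ^ 2 * (PI * (2 * INR h) / 2) = c ^ 2 * (PI * INR h) by field.
    split.
    + apply: (Rle_trans _ (2 / (PI * (2 * INR h + 1)) * (PI * INR h))).
        right. field. lra.
      apply: Rmult_le_compat_r; [nra | lra].
    + apply: (Rle_trans _ (1 / (PI * INR h) * (PI * INR h))).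
        apply: Rmult_le_compat_r; [nra | lra].
      right. field. lra.
  have hl1 := ln_near1 (2 * INR h / (2 * INR h + 1)) _ ltac:(apply: Rdiv_lt_0_compat; lra) hZ.
  rewrite (_ : (1 - 2 * INR h / (2 * INR h + 1)) / (2 * INR h / (2 * INR h + 1)) = / (2 * INR h)) in hl1; last by field; lra.
  rewrite Rabs_mult Rabs_right; last lra.
  apply: (Rle_trans _ (/ 2 * / (2 * INR h))).
    apply: Rmult_le_compat_l; [lra | exact: hl1].
  apply: (Rmult_le_reg_r (4 * INR h)); first lra.
  have -> : / 2 * / (2 * INR h) * (4 * INR h) = 1 by field; lra.
  have -> : 8 / (2 * INR h) * (4 * INR h) = 16 by field; lra.
  lra.
Qed.

Lemma Fb_bound l K : (2 <= l)%N -> (uphalf l <= K)%N -> (4 * K <= 3 * l)%N ->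
  Rabs (Fb l K) <= 8 / INR l + 3 * (INR K - INR l / 2) * ((2 * INR K - INR l) / INR l) ^ 2.
Proof.
move=> hl hK h4.
have hL : 0 < INR l by apply: lt_0_INR; apply/ltP; lia.
have hup : (l <= (uphalf l).*2)%N by rewrite uphalf_half; have := odd_double_half l; lia.
have w := walk l (uphalf l) (K - uphalf l) ltac:(lia) hup ltac:(lia).
rewrite subnKC // in w.
have c := Fb_center l hl.
have e : Fb l K = (Fb l K - Fb l (uphalf l)) + Fb l (uphalf l) by ring.
rewrite e. apply: (Rle_trans _ _ _ (Rabs_triang _ _)).
have hd : INR (K - uphalf l) <= INR K - INR l / 2.
  rewrite minus_INR; last by apply/leP.
  have := le_INR l ((uphalf l).*2) ltac:(apply/leP; exact: hup). rewrite -mul2n mult_INR /=. lra.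
have hY : 0 <= ((2 * INR K - INR l) / INR l) ^ 2 by apply: pow2_ge_0.
nra.
Qed.

Definition tailR (l k0 : nat) : R := sum_f_R0 (fun j => INR 'C(l, k0 + j)) (l - k0).

Lemma sum_scal (f : nat -> R) c N : sum_f_R0 (fun j => c * f j) N = c * sum_f_R0 f N.
Proof. elim: N => [|N IH] /=; [done| rewrite IH; ring]. Qed.

Lemma sum_mono_N (f : nat -> R) M N : (forall j, 0 <= f j) -> (M <= N)%N ->
  sum_f_R0 f M <= sum_f_R0 f N.
Proof.
move=> hf. elim: N => [|N IH] hMN.
  have -> : M = 0%N by lia. lra.
case: (leqP M N) => h.
  have := IH h. have := hf N.+1. rewrite /=. lra.
have -> : M = N.+1 by lia. lra.
Qed.

Lemma leR m n : (m <= n)%N -> INR m <= INR n.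
Proof. move=> h; apply: le_INR; exact/leP. Qed.
Lemma ltR m n : (m < n)%N -> INR m < INR n.
Proof. move=> h; apply: lt_INR; exact/ltP. Qed.
Arguments leR {m n}. Arguments ltR {m n}.

Lemma bin_up_geom l k0 j : (k0 <= l)%N ->
  INR 'C(l, k0 + j) <= INR 'C(l, k0) * ((INR l - INR k0) / (INR k0 + 1)) ^ j.
Proof.
move=> h. elim: j => [|j IH].
  rewrite addn0 /=. lra.
case: (ltnP (k0 + j) l) => hj.
- rewrite addnS binR_step //.
  have hk0 : 0 < INR k0 + 1 by have := pos_INR k0; lra.
  have hkj : 0 < INR (k0 + j) + 1 by have := pos_INR (k0 + j); lra.
  have r1 : 0 <= (INR l - INR (k0 + j)) / (INR (k0 + j) + 1).
    apply: Rdiv_le_0_compat => //. have := ltR hj. lra.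
  have r2 : (INR l - INR (k0 + j)) / (INR (k0 + j) + 1) <= (INR l - INR k0) / (INR k0 + 1).
    rewrite plus_INR. have := pos_INR j. have := pos_INR k0.
    have := ltR hj. rewrite plus_INR. move=> a b c.
    apply: (Rmult_le_reg_r ((INR k0 + 1) * (INR k0 + INR j + 1))); first nra.
    have -> : (INR l - (INR k0 + INR j)) / (INR k0 + INR j + 1) * ((INR k0 + 1) * (INR k0 + INR j + 1)) = (INR l - (INR k0 + INR j)) * (INR k0 + 1) by field; lra.
    have -> : (INR l - INR k0) / (INR k0 + 1) * ((INR k0 + 1) * (INR k0 + INR j + 1)) = (INR l - INR k0) * (INR k0 + INR j + 1) by field; lra.
    nra.
  rewrite /= (Rmult_comm _ (_ ^ j)) -Rmult_assoc.
  apply: Rmult_le_compat => //. apply: pos_INR.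
- rewrite bin_small; last lia.
  rewrite INR_0. apply: Rmult_le_pos; first apply: pos_INR.
  apply: pow_le. apply: Rdiv_le_0_compat.
    have := leR h. lra.
  have := pos_INR k0. lra.
Qed.

Lemma tail_upper l k0 : (k0 <= l)%N -> (l < k0.*2)%N ->
  tailR l k0 <= INR 'C(l, k0) * ((INR k0 + 1) / (2 * INR k0 + 1 - INR l)).
Proof.
move=> h1 h2.
have hk : INR l + 1 <= 2 * INR k0.
  have := leR h2. rewrite -mul2n mult_INR S_INR /=. lra.
have hk0 := leR h1.
set r := (INR l - INR k0) / (INR k0 + 1).
have hr0 : 0 <= r by apply: Rdiv_le_0_compat; have := pos_INR k0; lra.
have hr1 : r < 1.
  apply: (Rmult_lt_reg_r (INR k0 + 1)); first (have := pos_INR k0; lra).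
  rewrite /r. have -> : (INR l - INR k0) / (INR k0 + 1) * (INR k0 + 1) = INR l - INR k0 by field; have := pos_INR k0; lra.
  lra.
apply: (Rle_trans _ (sum_f_R0 (fun j => INR 'C(l, k0) * r ^ j) (l - k0))).
  apply: sum_Rle => j _. exact: bin_up_geom.
rewrite sum_scal tech3; last lra.
apply: Rmult_le_compat_l; first apply: pos_INR.
have -> : (INR k0 + 1) / (2 * INR k0 + 1 - INR l) = 1 / (1 - r).
  rewrite /r. field. have := pos_INR k0. lra.
apply: Rmult_le_compat_r; first (left; apply: Rinv_0_lt_compat; lra).
have := pow_le r (S (l - k0)) hr0. lra.
Qed.

Lemma bin_low_geom l k0 J j : (k0 + J <= l)%N -> (j <= J)%N -> (1 <= J)%N ->
  INR 'C(l, k0) * ((INR l - INR k0 - INR J + 1) / (INR k0 + INR J)) ^ j <= INR 'C(l, k0 + j).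
Proof.
move=> h1 h2 hJ. elim: j h2 => [|j IH] h2.
  rewrite addn0 /=. lra.
have IH' := IH ltac:(lia).
have hj : (k0 + j < l)%N by lia.
rewrite addnS binR_step //.
have hJr : 1 <= INR J by apply: (leR (m := 1%N)).
have hkj : 0 < INR (k0 + j) + 1 by have := pos_INR (k0 + j); lra.
have hl := leR h1. rewrite plus_INR in hl.
have hjJ : INR j + 1 <= INR J by have := leR h2; rewrite S_INR.
have hk0 := pos_INR k0. have hj0 := pos_INR j.
set rho := (INR l - INR k0 - INR J + 1) / (INR k0 + INR J).
have r0 : 0 <= rho by apply: Rdiv_le_0_compat; lra.
have r2 : rho <= (INR l - INR (k0 + j)) / (INR (k0 + j) + 1).
  rewrite plus_INR /rho.
  apply: (Rmult_le_reg_r ((INR k0 + INR J) * (INR k0 + INR j + 1))); first nra.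
  have -> : (INR l - (INR k0 + INR j)) / (INR k0 + INR j + 1) * ((INR k0 + INR J) * (INR k0 + INR j + 1)) = (INR l - (INR k0 + INR j)) * (INR k0 + INR J) by field; lra.
  have -> : (INR l - INR k0 - INR J + 1) / (INR k0 + INR J) * ((INR k0 + INR J) * (INR k0 + INR j + 1)) = (INR l - INR k0 - INR J + 1) * (INR k0 + INR j + 1) by field; lra.
  nra.
rewrite /= (Rmult_comm rho) -Rmult_assoc.
apply: Rmult_le_compat => //.
apply: Rmult_le_pos; [apply: pos_INR | apply: pow_le => //].
Qed.

Lemma tail_lower l k0 J : (k0 + J <= l)%N -> (1 <= J)%N -> (l < k0.*2)%N ->
  INR 'C(l, k0) * ((1 - ((INR l - INR k0 - INR J + 1) / (INR k0 + INR J)) ^ J)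
     / (1 - (INR l - INR k0 - INR J + 1) / (INR k0 + INR J))) <= tailR l k0.
Proof.
move=> h1 hJ h2.
have hk : INR l + 1 <= 2 * INR k0.
  have := leR h2. rewrite -mul2n mult_INR S_INR /=. lra.
have hJr : 1 <= INR J by apply: (leR (m := 1%N)).
have hk0 := pos_INR k0.
set rho := (INR l - INR k0 - INR J + 1) / (INR k0 + INR J).
have r1 : rho < 1.
  apply: (Rmult_lt_reg_r (INR k0 + INR J)); first lra.
  rewrite /rho. have -> : (INR l - INR k0 - INR J + 1) / (INR k0 + INR J) * (INR k0 + INR J) = INR l - INR k0 - INR J + 1 by field; lra.
  lra.
apply: (Rle_trans _ (sum_f_R0 (fun j => INR 'C(l, k0 + j)) J.-1)).
  have -> : INR 'C(l, k0) * ((1 - rho ^ J) / (1 - rho)) = sum_f_R0 (fun j => INR 'C(l, k0) * rho ^ j) J.-1.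
    rewrite sum_scal tech3; last lra. by rewrite prednK.
  apply: sum_Rle => j hj. apply: bin_low_geom => //. apply/leP. lia.
apply: sum_mono_N; first by move=> j; apply: pos_INR.
lia.
Qed.

Definition fl (x : R) : nat := Z.to_nat (Int_part x).

Lemma fl_spec x k : 0 <= x -> (INR k <= x <-> (k <= fl x)%N).
Proof.
move=> hx. have [b1 b2] := base_Int_part x.
have hI : (0 <= Int_part x)%Z.
  have : -1 < IZR (Int_part x) by lra.
  move/lt_IZR. lia.
have e : INR (fl x) = IZR (Int_part x).
  by rewrite /fl INR_IZR_INZ Z2Nat.id.
split.
- move=> hk. apply/leP. apply: INR_le. rewrite e.
  have : IZR (Z.of_nat k) < IZR (Int_part x) + 1 by rewrite -INR_IZR_INZ; lra.
  rewrite -plus_IZR. move/lt_IZR => h. rewrite INR_IZR_INZ. apply: IZR_le. lia.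
- move=> /leP /le_INR hk. rewrite e in hk. lra.
Qed.

Lemma fl_lt x k : 0 <= x -> (x < INR k <-> (fl x < k)%N).
Proof.
move=> hx. have := fl_spec x k hx. split.
  move=> h1. case: (leqP k (fl x)) => // h2. have := (proj2 H h2). lra.
move=> h1. case: (Rle_dec (INR k) x) => // h2.
  have := proj1 H h2. lia.
lra.
Qed.

Lemma INR_sum_nat (f : nat -> nat) K :
  INR (\sum_(0 <= i < K.+1) f i) = sum_f_R0 (fun i => INR (f i)) K.
Proof.
elim: K => [|K IH]; first by rewrite big_nat1.
by rewrite big_nat_recr //= plus_INR IH.
Qed.

Lemma sum_ext (f g : nat -> R) K : (forall i, f i = g i) -> sum_f_R0 f K = sum_f_R0 g K.
Proof. move=> h. elim: K => [|K IH] /=; by rewrite ?IH h. Qed.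

Lemma tail_nat l N : (N < l)%N ->
  INR (\sum_(0 <= k < l.+1) (N < k) * 'C(l, k)) = tailR l N.+1.
Proof.
move=> h.
have -> : (\sum_(0 <= k < l.+1) (N < k) * 'C(l, k) = \sum_(N.+1 <= k < l.+1) 'C(l, k))%N.
  rewrite (big_nat_widenl N.+1 0 l.+1) //.
  rewrite [in RHS]big_mkcond /=. apply: eq_bigr => k _.
  by case: (N < k)%N; rewrite ?mul1n ?mul0n.
rewrite -{1}(add0n N.+1) big_addn.
have -> : (l.+1 - N.+1 = (l - N.+1).+1)%N by lia.
rewrite INR_sum_nat /tailR. apply: sum_ext => i. by rewrite addnC.
Qed.

Lemma expn_INR a k : INR (a ^ k)%N = INR a ^ k.
Proof. elim: k => [|k IH]; first by []. by rewrite expnS mult_INR IH. Qed.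

Lemma s_thr_ge0 lam beta n : 0 <= s_thr lam beta n.
Proof.
rewrite /s_thr. have := pos_INR (ell lam n). have := sqrt_pos (INR (ell lam n)).
have := sqrt_pos (2 * (1 - lam) * ln (INR n) - ln (ln (INR n)) -
          2 * ln (sqrt (4 * PI * (1 - lam)) * ln (/ beta))). nra.
Qed.

Lemma prob_formula lam beta n :
  (fl (s_thr lam beta n) < ell lam n)%N ->
  prob_event lam beta n =
  (1 - tailR (ell lam n) (fl (s_thr lam beta n)).+1 / 2 ^ (ell lam n)) ^ (mblk lam n).
Proof.
move=> hN.
have hs := s_thr_ge0 lam beta n.
set s := s_thr lam beta n in hN hs *.
set l := ell lam n in hN *.
set m := mblk lam n.
set N := fl s in hN *.
have hml : (m * l <= n)%N by rewrite /m /mblk leq_trunc_div.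
pose Q := fun v : seq bool => (count id v <= N)%N.
have E1 : [set w : {ffun 'I_n -> bool} | if Rle_dec (INR (Smax lam n w)) s then true else false]
        = [set w | blocksP l m Q (Gw w)].
  apply/setP => w. rewrite !inE.
  have H1 : (INR (Smax lam n w) <= s) <-> (Smax lam n w <= N)%N by apply: fl_spec.
  have H2 : (Smax lam n w <= N)%N = blocksP l m Q (Gw w).
    rewrite /Smax /blocksP. apply/bigmax_leqP/allP.
    - move=> H j. rewrite mem_iota add0n => /andP [_ hj].
      have := H (Ordinal hj) isT. rewrite /block_sum /= -/l block_sum_G //.
      apply: leq_trans hml. rewrite leq_mul2r. by apply/orP; right.
    - move=> H j _. have hj := ltn_ord j.
      have := H j ltac:(by rewrite mem_iota add0n hj).
      rewrite /Q /block_sum -/l block_sum_G //.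
      apply: leq_trans hml. rewrite leq_mul2r. by apply/orP; right.
  case: (Rle_dec _ _) => h.
    by apply/esym; rewrite -H2; apply/(proj1 H1).
  apply/esym/negbTE. rewrite -H2. apply/negP => h'. apply: h. exact: (proj2 H1).
rewrite /prob_event -/s E1 card_G.
have hn : n = (m * l + (n - m * l))%N by rewrite subnKC.
have E2 : count (blocksP l m Q) (allb n) = (count Q (allb l) ^ m * 2 ^ (n - m * l))%N.
  rewrite -count_blocks. by rewrite -hn.
rewrite E2 mult_INR !expn_INR.
have E3 : INR (count Q (allb l)) = 2 ^ l - tailR l N.+1.
  have c1 := count_predC Q (allb l). rewrite size_allb in c1.
  have c2 : count (predC Q) (allb l) = (\sum_(0 <= k < l.+1) (N < k) * 'C(l, k))%N.
    rewrite -(count_sum_bin l (fun k => N < k)%N). apply: eq_count => v.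
    by rewrite /= /Q -ltnNge.
  rewrite -(tail_nat l N hN) -c2.
  have := f_equal INR c1. rewrite plus_INR expn_INR (_ : INR 2 = 2); [lra | simpl; lra].
rewrite E3.
have p2 : 0 < 2 ^ l by apply: pow_lt; lra.
have -> : 2 ^ n = (2 ^ l) ^ m * 2 ^ (n - m * l).
  rewrite -pow_mult -pow_add. f_equal. lia.
rewrite (_ : INR 2 = 2); last by simpl; lra.
have p3 : 0 < 2 ^ (n - m * l) by apply: pow_lt; lra.
have p4 : 0 < (2 ^ l) ^ m by apply: pow_lt.
rewrite (_ : 1 - tailR l N.+1 / 2 ^ l = (2 ^ l - tailR l N.+1) * / 2 ^ l); last by field; lra.
rewrite Rpow_mult_distr pow_inv. field. lra.
Qed.

Definition ev (P : nat -> Prop) := exists N, forall n, (N <= n)%N -> P n.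

Lemma ev_and P Q : ev P -> ev Q -> ev (fun n => P n /\ Q n).
Proof.
move=> [N1 h1] [N2 h2]. exists (maxn N1 N2) => n hn.
split; [apply: h1 | apply: h2]; lia.
Qed.

Lemma ev_imp (P Q : nat -> Prop) : ev P -> (forall n, P n -> Q n) -> ev Q.
Proof. move=> [N h] hPQ. exists N => n hn. by apply: hPQ; apply: h. Qed.

Arguments ev_imp {P Q}. Arguments ev_and {P Q}.

Lemma ev_ge N0 : ev (fun n => (N0 <= n)%N).
Proof. by exists N0. Qed.

Lemma cv_ev_lt u l eps : Un_cv u l -> 0 < eps -> ev (fun n => Rabs (u n - l) < eps).
Proof.
move=> h he. have [N hN] := h eps he. exists N => n hn. apply: hN. apply/leP. lia.
Qed.

Lemma cv0_bound u v : ev (fun n => Rabs (u n) <= v n) -> Un_cv v 0 -> Un_cv u 0.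
Proof.
move=> [N1 h1] hv eps he. have [N2 h2] := hv eps he.
exists (maxn N1 N2) => n hn. move/leP: hn => hn.
have a := h1 n ltac:(lia). have b := h2 n ltac:(apply/leP; lia).
rewrite /R_dist Rminus_0_r in b *. rewrite Rminus_0_r.
have := Rle_abs (v n). lra.
Qed.

Lemma cv_ev_ext u v l : ev (fun n => u n = v n) -> Un_cv u l -> Un_cv v l.
Proof.
move=> [N1 h1] hu eps he. have [N2 h2] := hu eps he.
exists (maxn N1 N2) => n hn. move/leP: hn => hn.
rewrite -h1; last lia. apply: h2. apply/leP. lia.
Qed.

Lemma cv_const c : Un_cv (fun _ => c) c.
Proof. move=> eps he. exists 0%nat => n _. rewrite /R_dist Rminus_diag Rabs_R0. lra. Qed.

Lemma cv_scal c u : Un_cv u 0 -> Un_cv (fun n => c * u n) 0.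
Proof. move=> h. have := CV_mult _ _ _ _ (cv_const c) h. by rewrite Rmult_0_r. Qed.

Lemma cv_add0 u v : Un_cv u 0 -> Un_cv v 0 -> Un_cv (fun n => u n + v n) 0.
Proof. move=> h1 h2. have := CV_plus _ _ _ _ h1 h2. by rewrite Rplus_0_r. Qed.

Lemma cv_sqrt0 u : Un_cv u 0 -> Un_cv (fun n => sqrt (u n)) 0.
Proof.
move=> h. have := continuity_seq sqrt u 0 (continuity_pt_sqrt 0 (Rle_refl 0)) h.
by rewrite sqrt_0.
Qed.

Lemma INR_unbounded A : exists N, A <= INR N.
Proof.
have [h1 _] := archimed A. exists (Z.to_nat (up A)).
case: (Z_le_gt_dec 0 (up A)) => hz.
  rewrite INR_IZR_INZ Z2Nat.id //. lra.
have : IZR (up A) < 0 by apply: IZR_lt; lia.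
have := pos_INR (Z.to_nat (up A)). lra.
Qed.

Lemma ln_inf A : ev (fun n => A <= ln (INR n)).
Proof.
have [N hN] := INR_unbounded (exp A).
exists N => n hn. have := le_INR N n ltac:(apply/leP; lia). move=> h.
rewrite -(ln_exp A). apply: ln_le; [apply: exp_pos | lra].
Qed.

Definition small_inf (v : R -> R) := forall eps, 0 < eps -> exists T, forall t, T <= t -> v t <= eps.

Lemma cv_small u v : ev (fun n => Rabs (u n) <= v (ln (INR n))) -> small_inf v -> Un_cv u 0.
Proof.
move=> [N1 h1] hv eps he. have [T hT] := hv (eps / 2) ltac:(lra).
have [N2 h2] := ln_inf T.
exists (maxn N1 N2) => n hn. move/leP: hn => hn.
rewrite /R_dist Rminus_0_r.
have a := h1 n ltac:(lia). have b := hT _ (h2 n ltac:(lia)). lra.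
Qed.

Lemma small_inv K : small_inf (fun t => K / t).
Proof.
move=> eps he. exists (Rabs K / eps + 1) => t ht.
have hK := Rabs_pos K. have hKe : 0 <= Rabs K / eps by apply: Rdiv_le_0_compat; lra.
have ht0 : 0 < t by lra.
apply: (Rmult_le_reg_r t) => //.
have -> : K / t * t = K by field; lra.
have := Rle_abs K. have : Rabs K <= eps * t.
  have -> : Rabs K = eps * (Rabs K / eps) by field; lra.
  apply: Rmult_le_compat_l; lra.
lra.
Qed.

Lemma small_le v w : small_inf w -> (exists T, forall t, T <= t -> v t <= w t) -> small_inf v.
Proof.
move=> hw [T0 h0] eps he. have [T hT] := hw eps he.
exists (Rmax T T0) => t ht. apply: (Rle_trans _ (w t)).
  apply: h0. have := Rmax_r T T0. lra.
apply: hT. have := Rmax_l T T0. lra.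
Qed.

Lemma ln_le_2sqrt y : 0 < y -> ln y <= 2 * sqrt y.
Proof.
move=> hy. have hs : 0 < sqrt y by apply: sqrt_lt_R0.
have e : ln y = 2 * ln (sqrt y).
  rewrite -{1}(sqrt_sqrt y); last lra. rewrite ln_mult //. ring.
rewrite e. have := ln_le_sub1 (sqrt y) hs. lra.
Qed.

Lemma x_le_exp x : x <= 2 * exp (x / 2).
Proof. have := exp_ineq1_le (x / 2). have := exp_pos (x / 2). lra. Qed.

Lemma exp_neg_le x : 0 <= x -> exp (- x) <= 1 / (1 + x).
Proof.
move=> hx. have := exp_ineq1_le x. move=> h.
rewrite exp_Ropp /Rdiv Rmult_1_l. apply: Rinv_le_contravar; lra.
Qed.

Definition Kc (lam beta : R) := 2 * ln (sqrt (4 * PI * (1 - lam)) * ln (/ beta)).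
Definition Dn (lam beta : R) (n : nat) :=
  2 * (1 - lam) * ln (INR n) - ln (ln (INR n)) - Kc lam beta.
Definition En (lam : R) (n : nat) := Rpower (INR n) lam.
Definition lr (lam : R) (n : nat) := INR (ell lam n).

Lemma En_exp lam n : (0 < n)%N -> En lam n = exp (lam * ln (INR n)).
Proof. by move=> h; rewrite /En /Rpower. Qed.

Lemma ell_bounds lam n : 0 <= lam -> (0 < n)%N -> En lam n - 1 < lr lam n <= En lam n.
Proof.
move=> hl hn. rewrite /lr /ell -/(En lam n).
have hE : 1 <= En lam n.
  rewrite En_exp //. have : 0 <= lam * ln (INR n).
    apply: Rmult_le_pos => //. rewrite -ln_1. apply: ln_le; first lra.
    apply: (le_INR 1). apply/leP. lia.
  have := exp_ineq1_le (lam * ln (INR n)). lra.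
have [b1 b2] := base_Int_part (En lam n).
have hI : (0 <= Int_part (En lam n))%Z.
  have : -1 < IZR (Int_part (En lam n)) by lra.
  move/lt_IZR. lia.
rewrite INR_IZR_INZ Z2Nat.id //. lra.
Qed.

Lemma small_inv_sqrt K : small_inf (fun t => K / sqrt t).
Proof.
move=> eps he. have [T hT] := small_inv (K ^ 2) (eps ^ 2) ltac:(nra).
exists (Rmax T 1) => t ht.
have ht1 : 1 <= t by have := Rmax_r T 1; lra.
have hs : 0 < sqrt t by apply: sqrt_lt_R0; lra.
have h := hT t ltac:(have := Rmax_l T 1; lra).
case: (Rle_dec (K / sqrt t) 0) => hk; first lra.
have hk' : 0 < K / sqrt t by lra.
have e : (K / sqrt t) ^ 2 = K ^ 2 / t.
  rewrite /Rdiv Rpow_mult_distr pow_inv.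
  have -> : sqrt t ^ 2 = t by rewrite /= Rmult_1_r sqrt_sqrt; lra.
  done.
rewrite -e in h. nra.
Qed.

Lemma Kt_bound lam K : 0 < 1 - lam -> exists T, forall t, T <= t -> 2 * sqrt t + K <= (1 - lam) * t.
Proof.
move=> hl. exists ((4 / (1 - lam)) ^ 2 + 2 * Rabs K / (1 - lam) + 1) => t ht.
have hK := Rabs_pos K. have hK' := Rle_abs K.
have a1 : 0 <= 2 * Rabs K / (1 - lam) by apply: Rdiv_le_0_compat; lra.
have a2 : 0 <= (4 / (1 - lam)) ^ 2 by apply: pow2_ge_0.
have ht0 : 0 < t by lra.
have hs : 0 < sqrt t by apply: sqrt_lt_R0.
have hss := sqrt_sqrt t ltac:(lra).
have h1 : 4 / (1 - lam) <= sqrt t.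
  apply: Rsqr_incr_0_var; last lra. rewrite /Rsqr hss.
  have : (4 / (1 - lam)) ^ 2 <= t by lra. by rewrite /= Rmult_1_r.
have h2 : 2 * sqrt t <= (1 - lam) * t / 2.
  have : 4 <= (1 - lam) * sqrt t.
    have -> : 4 = (1 - lam) * (4 / (1 - lam)) by field; lra.
    apply: Rmult_le_compat_l; lra.
  move=> h. have := Rmult_le_compat_r (sqrt t) _ _ (Rlt_le _ _ hs) h. rewrite Rmult_assoc hss. lra.
have h3 : Rabs K <= (1 - lam) * t / 2.
  have : 2 * Rabs K / (1 - lam) <= t by lra.
  move=> h. have := Rmult_le_compat_l (1 - lam) _ _ ltac:(lra) h.
  have -> : (1 - lam) * (2 * Rabs K / (1 - lam)) = 2 * Rabs K by field; lra.
  lra.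
lra.
Qed.

Lemma D_lower lam beta : 0 < 1 - lam -> ev (fun n => (1 - lam) * ln (INR n) <= Dn lam beta n).
Proof.
move=> hl. have [T hT] := Kt_bound lam (Kc lam beta) hl.
eapply (ev_imp (ln_inf (Rmax T 1))) => n hn.
have ht := Rmax_l T 1. have ht1 := Rmax_r T 1.
have := hT (ln (INR n)) ltac:(lra).
have := ln_le_2sqrt (ln (INR n)) ltac:(lra).
rewrite /Dn. lra.
Qed.

Lemma D_upper lam beta : 0 < lam -> ev (fun n => Dn lam beta n <= 2 * ln (INR n)).
Proof.
move=> hl. eapply (ev_imp (ln_inf (Rmax (exp (- Kc lam beta)) 1))) => n hn.
have ht := Rmax_l (exp (- Kc lam beta)) 1. have ht1 := Rmax_r (exp (- Kc lam beta)) 1.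
have : - Kc lam beta <= ln (ln (INR n)).
  rewrite -{1}(ln_exp (- Kc lam beta)). apply: ln_le; [apply: exp_pos | lra].
rewrite /Dn. nra.
Qed.

Lemma D_inf lam beta A : 0 < 1 - lam -> ev (fun n => A <= Dn lam beta n).
Proof.
move=> hl. eapply (ev_imp (ev_and (D_lower lam beta hl) (ln_inf (Rabs A / (1 - lam))))) => n [h1 h2].
have := Rle_abs A. have : Rabs A <= (1 - lam) * ln (INR n).
  have := Rmult_le_compat_l (1 - lam) _ _ ltac:(lra) h2.
  have -> : (1 - lam) * (Rabs A / (1 - lam)) = Rabs A by field; lra. done.
lra.
Qed.

Lemma ev_t1 : ev (fun n => 1 <= ln (INR n) /\ (0 < n)%N).
Proof.
eapply (ev_imp (ev_and (ln_inf 1) (ev_ge 1))) => n [h1 h2]. split => //.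
Qed.

Lemma e6_cv : Un_cv (fun n => / ln (INR n)) 0.
Proof.
apply: (cv_small _ (fun t => 1 / t)); last exact: small_inv.
eapply (ev_imp ev_t1) => n [h1 _].
rewrite Rabs_right; last (left; apply: Rinv_0_lt_compat; lra).
right. rewrite /Rdiv Rmult_1_l. done.
Qed.

Lemma e5_cv : Un_cv (fun n => ln (ln (INR n)) / ln (INR n)) 0.
Proof.
apply: (cv_small _ (fun t => 2 / sqrt t)); last exact: small_inv_sqrt.
eapply (ev_imp ev_t1) => n [h1 _].
set t := ln (INR n) in h1 *.
have h0 : 0 <= ln t by rewrite -ln_1; apply: ln_le; lra.
have h2 := ln_le_2sqrt t ltac:(lra).
have hs : 0 < sqrt t by apply: sqrt_lt_R0; lra.
have hss := sqrt_sqrt t ltac:(lra).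
rewrite Rabs_right; last (apply: Rle_ge; apply: Rdiv_le_0_compat; lra).
apply: (Rmult_le_reg_r t); first lra.
have -> : ln t / t * t = ln t by field; lra.
have -> : 2 / sqrt t * t = 2 * sqrt t by rewrite -{2}hss; field; lra.
done.
Qed.

Lemma e2_cv lam beta : 0 < 1 - lam -> Un_cv (fun n => / sqrt (Dn lam beta n)) 0.
Proof.
move=> hl.
apply: (cv_small _ (fun t => (/ sqrt (1 - lam)) / sqrt t)); last exact: small_inv_sqrt.
eapply (ev_imp (ev_and ev_t1 (D_lower lam beta hl))) => n [[h1 _] h2].
set t := ln (INR n) in h1 h2 *.
have hst : 0 < sqrt t by apply: sqrt_lt_R0; lra.
have hsl : 0 < sqrt (1 - lam) by apply: sqrt_lt_R0; lra.
have hD : 0 < (1 - lam) * t by nra.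
have hsD : sqrt ((1 - lam) * t) <= sqrt (Dn lam beta n) by apply: sqrt_le_1_alt.
rewrite sqrt_mult in hsD; try lra.
have hpos : 0 < sqrt (1 - lam) * sqrt t by nra.
rewrite Rabs_right; last (left; apply: Rinv_0_lt_compat; lra).
have -> : / sqrt (1 - lam) / sqrt t = / (sqrt (1 - lam) * sqrt t) by field; lra.
apply: Rinv_le_contravar => //.
Qed.

Lemma exp_ln_n n : (0 < n)%N -> exp (ln (INR n)) = INR n.
Proof. move=> h. apply: exp_ln. apply: lt_0_INR. apply/ltP. lia. Qed.

Lemma e4_cv lam : 0 < 1 - lam -> Un_cv (fun n => En lam n / INR n) 0.
Proof.
move=> hl.
apply: (cv_small _ (fun t => (/ (1 - lam)) / t)); last exact: small_inv.
eapply (ev_imp ev_t1) => n [h1 hn].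
rewrite En_exp // -{2}(exp_ln_n n hn).
set t := ln (INR n) in h1 *.
have -> : exp (lam * t) / exp t = exp (- ((1 - lam) * t)).
  rewrite /Rdiv -exp_Ropp -exp_plus. congr exp. ring.
rewrite Rabs_right; last (left; apply: exp_pos).
apply: (Rle_trans _ _ _ (exp_neg_le ((1 - lam) * t) ltac:(nra))).
apply: (Rmult_le_reg_r ((1 + (1 - lam) * t) * ((1 - lam) * t))); first (apply: Rmult_lt_0_compat; nra).
have -> : 1 / (1 + (1 - lam) * t) * ((1 + (1 - lam) * t) * ((1 - lam) * t)) = (1 - lam) * t by field; nra.
have -> : / (1 - lam) / t * ((1 + (1 - lam) * t) * ((1 - lam) * t)) = 1 + (1 - lam) * t by field; lra.
lra.
Qed.

Lemma lr_lower lam n : 0 < lam -> (0 < n)%N -> lam * ln (INR n) < lr lam n.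
Proof.
move=> hl hn. have [b1 _] := ell_bounds lam n ltac:(lra) hn.
rewrite En_exp // in b1. have := exp_ineq1_le (lam * ln (INR n)). lra.
Qed.

Lemma e1_cv lam : 0 < lam -> Un_cv (fun n => / lr lam n) 0.
Proof.
move=> hl.
apply: (cv_small _ (fun t => (/ lam) / t)); last exact: small_inv.
eapply (ev_imp ev_t1) => n [h1 hn].
have h := lr_lower lam n hl hn.
set t := ln (INR n) in h1 h *.
have ht : 0 < lam * t by nra.
rewrite Rabs_right; last (left; apply: Rinv_0_lt_compat; lra).
have -> : / lam / t = / (lam * t) by field; lra.
apply: Rinv_le_contravar; lra.
Qed.

Lemma exp3 x : exp x ^ 3 = exp (3 * x).
Proof.
have -> : 3 * x = x + (x + x) by ring.
rewrite !exp_plus /=. ring.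
Qed.

Lemma e3_cv lam beta : 0 < lam < 1 -> Un_cv (fun n => Dn lam beta n ^ 3 / lr lam n) 0.
Proof.
move=> [hl hl1].
pose C := 16 * (12 / lam) ^ 3 * (4 / (3 * lam)).
apply: (cv_small _ (fun t => C / t)); last exact: small_inv.
eapply (ev_imp (ev_and (ev_and ev_t1 (D_upper lam beta hl))
         (ev_and (D_lower lam beta ltac:(lra)) (ln_inf (1 / lam))))) => n [[[h1 hn] hD1] [hD2 h3]].
have [b1 b2] := ell_bounds lam n ltac:(lra) hn.
rewrite En_exp // in b1 b2.
set t := ln (INR n) in h1 hD1 hD2 h3 b1 b2 *.
have hlt : 1 <= lam * t.
  have := Rmult_le_compat_l lam _ _ ltac:(lra) h3.
  have -> : lam * (1 / lam) = 1 by field; lra. done.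
have hE : 2 <= exp (lam * t) by have := exp_ineq1_le (lam * t); lra.
have hL : exp (lam * t) / 2 <= lr lam n by lra.
have hD0 : 0 <= Dn lam beta n by nra.
set D := Dn lam beta n in hD1 hD2 hD0 *.
set L := lr lam n in hL b1 b2 *.
have hL0 : 0 < L by lra.
have hEp := exp_pos (lam * t).
rewrite Rabs_right; last (apply: Rle_ge; apply: Rdiv_le_0_compat; [apply: pow_le | ]; lra).
have s1 : D ^ 3 / L <= 16 * t ^ 3 / exp (lam * t).
  apply: (Rmult_le_reg_r (L * exp (lam * t))); first nra.
  have -> : D ^ 3 / L * (L * exp (lam * t)) = D ^ 3 * exp (lam * t) by field; lra.
  have -> : 16 * t ^ 3 / exp (lam * t) * (L * exp (lam * t)) = 16 * t ^ 3 * L by field; lra.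
  have : D ^ 3 <= (2 * t) ^ 3 by apply: pow_incr; lra.
  have : 0 <= D ^ 3 by apply: pow_le.
  have : (2 * t) ^ 3 = 8 * t ^ 3 by ring.
  nra.
have s2 : t <= 12 / lam * exp (lam * t / 12).
  have := x_le_exp (lam * t / 6).
  have -> : lam * t / 6 / 2 = lam * t / 12 by field.
  move=> h. apply: (Rmult_le_reg_l (lam / 6)); first lra.
  have -> : lam / 6 * (12 / lam * exp (lam * t / 12)) = 2 * exp (lam * t / 12) by field; lra.
  lra.
have s3 : t ^ 3 <= (12 / lam) ^ 3 * exp (3 * (lam * t / 12)).
  rewrite -exp3 -Rpow_mult_distr. apply: pow_incr; lra.
have s4 : 16 * t ^ 3 / exp (lam * t) <= 16 * (12 / lam) ^ 3 * exp (- (3 * lam * t / 4)).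
  rewrite exp_Ropp. apply: (Rmult_le_reg_r (exp (lam * t))) => //.
  have -> : 16 * t ^ 3 / exp (lam * t) * exp (lam * t) = 16 * t ^ 3 by field; lra.
  have e : exp (lam * t) = exp (3 * lam * t / 4) * exp (3 * (lam * t / 12)).
    rewrite -exp_plus. congr exp. field.
  rewrite e. have := exp_pos (3 * lam * t / 4). move=> hp.
  have -> : 16 * (12 / lam) ^ 3 * / exp (3 * lam * t / 4) * (exp (3 * lam * t / 4) * exp (3 * (lam * t / 12)))
     = 16 * ((12 / lam) ^ 3 * exp (3 * (lam * t / 12))) by field; lra.
  lra.
have s5 : exp (- (3 * lam * t / 4)) <= (4 / (3 * lam)) / t.
  apply: (Rle_trans _ _ _ (exp_neg_le (3 * lam * t / 4) ltac:(nra))).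
  apply: (Rmult_le_reg_r ((1 + 3 * lam * t / 4) * (3 * lam * t))); first (apply: Rmult_lt_0_compat; nra).
  have -> : 1 / (1 + 3 * lam * t / 4) * ((1 + 3 * lam * t / 4) * (3 * lam * t)) = 3 * lam * t by field; nra.
  have -> : 4 / (3 * lam) / t * ((1 + 3 * lam * t / 4) * (3 * lam * t)) = 4 * (1 + 3 * lam * t / 4) by field; lra.
  lra.
have hc : 0 <= 16 * (12 / lam) ^ 3.
  apply: Rmult_le_pos; first lra. apply: pow_le. apply: Rdiv_le_0_compat; lra.
apply: (Rle_trans _ _ _ s1). apply: (Rle_trans _ _ _ s4).
rewrite /C. have -> : 16 * (12 / lam) ^ 3 * (4 / (3 * lam)) / t = 16 * (12 / lam) ^ 3 * ((4 / (3 * lam)) / t) by field; lra.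
apply: Rmult_le_compat_l => //.
Qed.

Lemma fl_bounds x : 0 <= x -> INR (fl x) <= x < INR (fl x) + 1.
Proof.
move=> hx. have [b1 b2] := base_Int_part x.
have hI : (0 <= Int_part x)%Z.
  have : -1 < IZR (Int_part x) by lra.
  move/lt_IZR. lia.
rewrite /fl INR_IZR_INZ Z2Nat.id //. lra.
Qed.

Lemma INR_le_nat m n : INR m <= INR n -> (m <= n)%N.
Proof. move=> h. apply/leP. exact: INR_le. Qed.

Lemma exp_pow_nat x (J : nat) : exp x ^ J = exp (INR J * x).
Proof.
elim: J => [|J IH]; first by rewrite /= Rmult_0_l exp_0.
rewrite -tech_pow_Rmult IH -exp_plus S_INR. congr exp. ring.
Qed.

Lemma pow_le_compat_base x y (J : nat) : 0 <= x -> x <= y -> x ^ J <= y ^ J.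
Proof. move=> h1 h2. apply: pow_incr. lra. Qed.

Definition tbound (l a : R) : R :=
  8 / l + 12 * (a + 1) ^ 3 / l ^ 2 + 2 * (2 * a + 1) / l + 4 * (sqrt l / a)
  + 2 * (a + 2) / l + 3 / (2 * a).

Lemma tail_asym (ell0 : nat) (a : R) :
  64 <= INR ell0 -> 2 <= a -> a + 1 + sqrt (INR ell0) <= INR ell0 / 4 ->
  4 * sqrt (INR ell0) <= a ->
  Rabs (ln (tailR ell0 (fl (INR ell0 / 2 + a)).+1 / 2 ^ ell0)
        - (- / 2 * ln (PI * INR ell0 / 2) - 2 * a ^ 2 / INR ell0 + ln (INR ell0 / (4 * a))))
  <= tbound (INR ell0) a.
Proof.
move=> hl ha hc1 hc2.
set l := INR ell0 in hl hc1 hc2 *.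
set s := l / 2 + a.
have hs0 : 0 <= s by rewrite /s; lra.
have es : s = l / 2 + a by [].
set k0 := (fl s).+1.
have [f1 f2] := fl_bounds s hs0.
have eK : INR k0 = INR (fl s) + 1 by rewrite /k0 S_INR.
set K0 := INR k0 in eK *.
have hK1 : s < K0 by lra.
have hK2 : K0 <= s + 1 by lra.
have hsl : 8 <= sqrt l.
  have -> : 8 = sqrt (8 * 8) by rewrite sqrt_square; lra.
  apply: sqrt_le_1_alt. lra.
have hsl2 := sqrt_sqrt l ltac:(lra).
set J := fl (sqrt l).
have [j1 j2] := fl_bounds (sqrt l) ltac:(lra).
set Jr := INR J in j1 j2.
have hJ1 : (1 <= J)%N. apply: INR_le_nat. rewrite /= -/Jr. lra.
have nk0l : (k0 <= ell0)%N. apply: INR_le_nat. rewrite -/K0 -/l. lra.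
have nl2k0 : (ell0 < k0.*2)%N.
  apply: INR_le_nat. rewrite -mul2n mult_INR S_INR -/K0 -/l /=. lra.
have nk0J : (k0 + J <= ell0)%N.
  apply: INR_le_nat. rewrite plus_INR -/K0 -/l -/Jr. lra.
have nup : (uphalf ell0 <= k0)%N.
  apply: INR_le_nat.
  have : ((uphalf ell0).*2 <= ell0.+1)%N by rewrite uphalf_half; have := odd_double_half ell0; case: (odd ell0) => /=; lia.
  move/leP/le_INR. rewrite -mul2n mult_INR (S_INR ell0) -/l -/K0. change (INR 2) with (1+1). lra.
have n4 : (4 * k0 <= 3 * ell0)%N.
  apply: INR_le_nat. rewrite !mult_INR -/K0 -/l /=. have := sqrt_pos l. lra.
have n2l : (2 <= ell0)%N by apply: INR_le_nat; rewrite -/l /=; lra.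
have hC := binR_pos ell0 k0 nk0l.
set C := INR 'C(ell0, k0) in hC.
have p2 : 0 < 2 ^ ell0 by apply: pow_lt; lra.
set X := (K0 + 1) / (2 * K0 + 1 - l).
have hX : 0 < X by rewrite /X; apply: Rdiv_lt_0_compat; lra.
have tu := tail_upper ell0 k0 nk0l nl2k0. rewrite -/C -/K0 -/l -/X in tu.
have tl := tail_lower ell0 k0 J nk0J hJ1 nl2k0. rewrite -/C -/K0 -/l -/Jr in tl.
set rho := (l - K0 - Jr + 1) / (K0 + Jr) in tl.
set T := tailR ell0 k0 in tu tl.
have hrho0 : 0 <= rho by rewrite /rho; apply: Rdiv_le_0_compat; lra.
have hrho1 : rho <= 1 - 2 * a / l.
  rewrite /rho. apply: (Rmult_le_reg_r ((K0 + Jr) * l)); first nra.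
  have -> : (l - K0 - Jr + 1) / (K0 + Jr) * ((K0 + Jr) * l) = (l - K0 - Jr + 1) * l by field; lra.
  have -> : (1 - 2 * a / l) * ((K0 + Jr) * l) = (K0 + Jr) * l - 2 * a * (K0 + Jr) by field; lra.
  nra.
set w := sqrt l / a.
have hw0 : 0 < w by rewrite /w; apply: Rdiv_lt_0_compat; lra.
have hw1 : w <= 1 / 4.
  rewrite /w. apply: (Rmult_le_reg_r a); first lra.
  have -> : sqrt l / a * a = sqrt l by field; lra. lra.
have hrJ : rho ^ J <= w.
  have e1 : rho ^ J <= exp (- (2 * a / l)) ^ J.
    apply: pow_le_compat_base => //. have := exp_ineq1_le (- (2 * a / l)). lra.
  rewrite exp_pow_nat in e1.
  have e2 : sqrt l / 2 <= Jr by lra.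
  have e3 : a / sqrt l <= INR J * (2 * a / l).
    rewrite -/Jr. apply: (Rmult_le_reg_r (sqrt l * l)); first nra.
    have -> : a / sqrt l * (sqrt l * l) = a * l by field; lra.
    have -> : Jr * (2 * a / l) * (sqrt l * l) = 2 * a * Jr * sqrt l by field; lra.
    have : l <= 2 * Jr * sqrt l by nra.
    nra.
  have e4 : exp (INR J * - (2 * a / l)) <= exp (- (a / sqrt l)).
    have [h|h] : INR J * - (2 * a / l) < - (a / sqrt l) \/ INR J * - (2 * a / l) = - (a / sqrt l) by lra.
      left. by apply: exp_increasing.
    by rewrite h; right.
  have e5 := exp_neg_le (a / sqrt l) ltac:(apply: Rdiv_le_0_compat; lra).
  have hx : 0 < a / sqrt l by apply: Rdiv_lt_0_compat; lra.
  have e6 : 1 / (1 + a / sqrt l) <= w.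
    have ew : w = / (a / sqrt l) by rewrite /w; field; lra.
    rewrite /Rdiv Rmult_1_l ew. apply: Rinv_le_contravar => //. lra.
  lra.
have wa : w * a = sqrt l by rewrite /w; field; lra.
have hP : 2 * a < 2 * K0 + 1 - l by lra.
have hq1 : (2 * K0 + 2 * Jr - 1 - l) * (1 - w) <= 2 * K0 + 1 - l.
  have h1 : 2 * sqrt l <= w * (2 * K0 + 1 - l) by nra.
  have h2 : 0 <= w * (2 * Jr - 2) by apply: Rmult_le_pos; lra.
  nra.
have hden : 0 < 2 * K0 + 2 * Jr - 1 - l by lra.
have hq2 : (1 - w) * X <= (K0 + Jr) / (2 * K0 + 2 * Jr - 1 - l).
  rewrite /X. apply: (Rmult_le_reg_r ((2 * K0 + 1 - l) * (2 * K0 + 2 * Jr - 1 - l))); first nra.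
  have -> : (1 - w) * ((K0 + 1) / (2 * K0 + 1 - l)) * ((2 * K0 + 1 - l) * (2 * K0 + 2 * Jr - 1 - l))
     = (K0 + 1) * ((2 * K0 + 2 * Jr - 1 - l) * (1 - w)) by field; lra.
  have -> : (K0 + Jr) / (2 * K0 + 2 * Jr - 1 - l) * ((2 * K0 + 1 - l) * (2 * K0 + 2 * Jr - 1 - l))
     = (K0 + Jr) * (2 * K0 + 1 - l) by field; lra.
  have : 0 <= K0 + 1 by lra.
  nra.
have erho : 1 - rho = (2 * K0 + 2 * Jr - 1 - l) / (K0 + Jr) by rewrite /rho; field; lra.
have hgeo : (1 - 2 * w) * X <= (1 - rho ^ J) / (1 - rho).
  rewrite erho.
  have -> : (1 - rho ^ J) / ((2 * K0 + 2 * Jr - 1 - l) / (K0 + Jr)) = (1 - rho ^ J) * ((K0 + Jr) / (2 * K0 + 2 * Jr - 1 - l)) by field; lra.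
  apply: (Rle_trans _ ((1 - w) * ((1 - w) * X))).
    have : 0 <= w * w * X by apply: Rmult_le_pos; [nra | lra].
    nra.
  apply: Rmult_le_compat; try lra.
  apply: Rmult_le_pos; lra.
have hT0 : 0 < T.
  apply: (Rlt_le_trans _ (C * ((1 - rho ^ J) / (1 - rho)))) => //.
  apply: Rmult_lt_0_compat => //. apply: (Rlt_le_trans _ ((1 - 2 * w) * X)) => //. nra.
set R0 := T / (C * X).
have hR : 1 - 2 * w <= R0 <= 1.
  rewrite /R0. split.
  - apply: (Rmult_le_reg_r (C * X)); first nra.
    have -> : T / (C * X) * (C * X) = T by field; lra.
    have := Rmult_le_compat_l C _ _ (Rlt_le _ _ hC) hgeo. nra.
  - apply: (Rmult_le_reg_r (C * X)); first nra.
    have -> : T / (C * X) * (C * X) = T by field; lra. lra.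
have lnR := ln_near1 (1 - 2 * w) R0 ltac:(lra) hR.
have lnR' : Rabs (ln R0) <= 4 * w.
  apply: (Rle_trans _ _ _ lnR).
  apply: (Rmult_le_reg_r (1 - 2 * w)); first lra.
  have -> : (1 - (1 - 2 * w)) / (1 - 2 * w) * (1 - 2 * w) = 2 * w by field; lra.
  nra.
set A := 2 * (K0 + 1) / l.
set B := 2 * a / (2 * K0 + 1 - l).
have hA : 1 <= A <= 1 + 2 * (a + 2) / l.
  rewrite /A. split.
    apply: (Rmult_le_reg_r l); first lra.
    have -> : 2 * (K0 + 1) / l * l = 2 * (K0 + 1) by field; lra. lra.
  apply: (Rmult_le_reg_r l); first lra.
  have -> : 2 * (K0 + 1) / l * l = 2 * (K0 + 1) by field; lra.
  have -> : (1 + 2 * (a + 2) / l) * l = l + 2 * (a + 2) by field; lra. lra.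
have hB : 2 * a / (2 * a + 3) <= B <= 1.
  rewrite /B. split.
    apply: Rmult_le_compat_l; first lra. apply: Rinv_le_contravar; lra.
  apply: (Rmult_le_reg_r (2 * K0 + 1 - l)); first lra.
  have -> : 2 * a / (2 * K0 + 1 - l) * (2 * K0 + 1 - l) = 2 * a by field; lra. lra.
have eX : X = A * B * (l / (4 * a)) by rewrite /X /A /B; field; lra.
have lA : Rabs (ln A) <= 2 * (a + 2) / l.
  have := ln_le_sub1 A ltac:(lra). have : 0 <= ln A by rewrite -ln_1; apply: ln_le; lra.
  move=> h1 h2. rewrite Rabs_right; lra.
have lB : Rabs (ln B) <= 3 / (2 * a).
  have := ln_near1 (2 * a / (2 * a + 3)) B ltac:(apply: Rdiv_lt_0_compat; lra) hB.
  have -> : (1 - 2 * a / (2 * a + 3)) / (2 * a / (2 * a + 3)) = 3 / (2 * a) by field; lra. done.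
have hA0 : 0 < A by lra.
have hB1 : 0 < 2 * a / (2 * a + 3) by apply: Rdiv_lt_0_compat; lra.
have hB0 : 0 < B by lra.
have hla : 0 < l / (4 * a) by apply: Rdiv_lt_0_compat; lra.
have lX : ln X = ln A + ln B + ln (l / (4 * a)).
  have hAB : 0 < A * B by apply: Rmult_lt_0_compat.
  by rewrite eX (ln_mult (A * B)) // (ln_mult A B).
have fb := Fb_bound ell0 k0 n2l nup n4. rewrite -/K0 -/l in fb.
have hu1 : a < K0 - l / 2 by lra.
have hu2 : K0 - l / 2 <= a + 1 by lra.
have fb' : Rabs (Fb ell0 k0) <= 8 / l + 12 * (a + 1) ^ 3 / l ^ 2.
  apply: (Rle_trans _ _ _ fb). apply: Rplus_le_compat_l.
  have -> : 3 * (K0 - l / 2) * ((2 * K0 - l) / l) ^ 2 = 12 * (K0 - l / 2) ^ 3 / l ^ 2 by field; lra.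
  apply: Rmult_le_compat_r; first (left; apply: Rinv_0_lt_compat; apply: pow_lt; lra).
  apply: Rmult_le_compat_l; first lra. apply: pow_incr. lra.
have eg : gq ell0 k0 = 2 * (K0 - l / 2) ^ 2 / l by [].
have g' : Rabs (gq ell0 k0 - 2 * a ^ 2 / l) <= 2 * (2 * a + 1) / l.
  rewrite eg. have -> : 2 * (K0 - l / 2) ^ 2 / l - 2 * a ^ 2 / l = 2 * ((K0 - l / 2) ^ 2 - a ^ 2) / l by field; lra.
  rewrite Rabs_right.
    apply: Rmult_le_compat_r; first (left; apply: Rinv_0_lt_compat; lra).
    nra.
  apply: Rle_ge. apply: Rdiv_le_0_compat; nra.
have eFb : ln (C / 2 ^ ell0) = Fb ell0 k0 - gq ell0 k0 - / 2 * ln (PI * l / 2) by rewrite /Fb -/C -/l; ring.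
have eT : ln (T / 2 ^ ell0) = ln (C / 2 ^ ell0) + ln R0 + ln X.
  have -> : T / 2 ^ ell0 = (C / 2 ^ ell0) * R0 * X by rewrite /R0; field; lra.
  have hC2 : 0 < C / 2 ^ ell0 by apply: Rdiv_lt_0_compat.
  have hR0 : 0 < R0 by lra.
  have hCR : 0 < C / 2 ^ ell0 * R0 by apply: Rmult_lt_0_compat.
  by rewrite (ln_mult (C / 2 ^ ell0 * R0) X) // (ln_mult (C / 2 ^ ell0) R0).
rewrite eT eFb lX.
have -> : Fb ell0 k0 - gq ell0 k0 - / 2 * ln (PI * l / 2) + ln R0 + (ln A + ln B + ln (l / (4 * a))) -
  (- / 2 * ln (PI * l / 2) - 2 * a ^ 2 / l + ln (l / (4 * a)))
  = Fb ell0 k0 - (gq ell0 k0 - 2 * a ^ 2 / l) + ln R0 + ln A + ln B by ring.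
rewrite /tbound -/w.
have t1 := Rabs_triang (Fb ell0 k0 - (gq ell0 k0 - 2 * a ^ 2 / l) + ln R0 + ln A) (ln B).
have t2 := Rabs_triang (Fb ell0 k0 - (gq ell0 k0 - 2 * a ^ 2 / l) + ln R0) (ln A).
have t3 := Rabs_triang (Fb ell0 k0 - (gq ell0 k0 - 2 * a ^ 2 / l)) (ln R0).
have t4 : Rabs (Fb ell0 k0 - (gq ell0 k0 - 2 * a ^ 2 / l)) <= Rabs (Fb ell0 k0) + Rabs (gq ell0 k0 - 2 * a ^ 2 / l).
  rewrite -(Rabs_Ropp (gq ell0 k0 - 2 * a ^ 2 / l)). exact: Rabs_triang.
lra.
Qed.

Lemma ln_sqrt x : 0 < x -> ln (sqrt x) = ln x / 2.
Proof.
move=> hx. have hs : 0 < sqrt x by apply: sqrt_lt_R0.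
have : ln x = ln (sqrt x * sqrt x) by rewrite sqrt_sqrt //; lra.
rewrite ln_mult //. lra.
Qed.

Lemma ln_div x y : 0 < x -> 0 < y -> ln (x / y) = ln x - ln y.
Proof. move=> hx hy. rewrite /Rdiv ln_mult //; last by apply: Rinv_0_lt_compat. rewrite ln_Rinv //. Qed.

Definition Lb (beta : R) := ln (/ beta).
Definition an (lam beta : R) (n : nat) := sqrt (lr lam n) * sqrt (Dn lam beta n) / 2.
Definition qn (lam beta : R) (n : nat) :=
  tailR (ell lam n) (fl (s_thr lam beta n)).+1 / 2 ^ (ell lam n).
Definition Mn (lam : R) (n : nat) := INR (mblk lam n).

Lemma s_thr_eq lam beta n : s_thr lam beta n = lr lam n / 2 + an lam beta n.
Proof. rewrite /s_thr /an /lr /Dn /Kc. field. Qed.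

Lemma bracket_id lam beta n : 0 < lam < 1 -> 0 < beta < 1 -> 1 <= ln (INR n) ->
  0 < lr lam n -> 0 < Dn lam beta n ->
  (1 - lam) * ln (INR n) + (- / 2 * ln (PI * lr lam n / 2) - 2 * an lam beta n ^ 2 / lr lam n
     + ln (lr lam n / (4 * an lam beta n))) - ln (Lb beta)
  = / 2 * ln (2 * (1 - lam)) - / 2 * ln (Dn lam beta n / ln (INR n)).
Proof.
move=> [l0 l1] [b0 b1] ht hl hD.
have hpi := PI_RGT_0.
set t := ln (INR n) in ht *.
set l := lr lam n in hl *.
set D := Dn lam beta n in hD *.
have hsl : 0 < sqrt l by apply: sqrt_lt_R0.
have hsD : 0 < sqrt D by apply: sqrt_lt_R0.
have ea : an lam beta n = sqrt l * sqrt D / 2 by [].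
have hL : 0 < Lb beta.
  rewrite /Lb -ln_1. apply: ln_increasing; first lra.
  rewrite -Rinv_1. apply: Rinv_lt_contravar; lra.
have e1 : 2 * an lam beta n ^ 2 / l = D / 2.
  rewrite ea. have -> : (sqrt l * sqrt D / 2) ^ 2 = (sqrt l * sqrt l) * (sqrt D * sqrt D) / 4 by field.
  rewrite !sqrt_sqrt; try lra. field. lra.
have e2 : ln (l / (4 * an lam beta n)) = ln l / 2 - ln 2 - ln D / 2.
  have -> : l / (4 * an lam beta n) = sqrt l / (2 * sqrt D).
    rewrite ea. rewrite -{1}(sqrt_sqrt l); last lra. field. lra.
  rewrite ln_div //; last lra. rewrite ln_mult //; try lra. rewrite !ln_sqrt //. ring.
have e3 : ln (PI * l / 2) = ln PI + ln l - ln 2.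
  rewrite ln_div; try lra; last nra. rewrite ln_mult //.
have hc : 0 < 4 * PI * (1 - lam) by nra.
have hsc : 0 < sqrt (4 * PI * (1 - lam)) by apply: sqrt_lt_R0.
have e4 : Kc lam beta = ln (4 * PI * (1 - lam)) + 2 * ln (Lb beta).
  rewrite /Kc -/(Lb beta) ln_mult // ln_sqrt //. field.
have e5 : ln (4 * PI * (1 - lam)) = 2 * ln 2 + ln PI + ln (1 - lam).
  rewrite (ln_mult (4 * PI) (1 - lam)); try lra; try nra.
  rewrite (ln_mult 4 PI); try lra.
  have -> : ln 4 = 2 * ln 2.
    rewrite (_ : 4 = 2 * 2); last ring. rewrite ln_mult; lra.
  ring.
have e6 : ln (2 * (1 - lam)) = ln 2 + ln (1 - lam) by rewrite ln_mult; lra.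
have e7 : ln (D / t) = ln D - ln t by rewrite ln_div; lra.
have eD : D = 2 * (1 - lam) * t - ln t - Kc lam beta by [].
rewrite e1 e2 e3 e6 e7.
rewrite e4 e5 in eD.
lra.
Qed.

Lemma P1_bound lam n : 0 < lam < 1 -> (0 < n)%N -> 1 <= lr lam n ->
  En lam n / INR n <= 1 / 2 ->
  0 < Mn lam n /\
  Rabs (ln (Mn lam n) - (1 - lam) * ln (INR n)) <= 2 * (En lam n / INR n) + / lr lam n.
Proof.
move=> [l0 l1] hn hl1 he4.
have [b1 b2] := ell_bounds lam n ltac:(lra) hn.
have hnR : 0 < INR n by apply: lt_0_INR; apply/ltP; lia.
set l := lr lam n in hl1 b1 b2 *.
set E := En lam n in b1 b2 he4 *.
have hl0 : (0 < ell lam n)%N by apply: INR_le_nat; rewrite -/(lr lam n) -/l /=; lra.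
have d1 := leq_trunc_div n (ell lam n).
have d2 := ltn_ceil n hl0.
have r1 : Mn lam n * l <= INR n.
  have := le_INR _ _ (elimT leP d1). by rewrite mult_INR.
have r2 : INR n < (Mn lam n + 1) * l.
  have := lt_INR _ _ (elimT ltP d2). by rewrite mult_INR S_INR.
set M := Mn lam n in r1 r2 *.
have hE0 : 0 < E by lra.
have he4' : E <= INR n / 2.
  apply: (Rmult_le_reg_r (/ INR n)); first by apply: Rinv_0_lt_compat.
  have -> : INR n / 2 * / INR n = 1 / 2 by field; lra. done.
have hM : 0 < M.
  have : 0 < M * l by nra.
  move=> h. apply: (Rmult_lt_reg_r l); lra.
split => //.
have eE : ln E = lam * ln (INR n) by rewrite /E En_exp // ln_exp.
have e : ln M - (1 - lam) * ln (INR n) = ln (M * l / INR n) + ln (E / l).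
  rewrite !ln_div; try lra; try nra. rewrite ln_mult; try lra. 
rewrite e.
have x1 : 1 - E / INR n <= M * l / INR n <= 1.
  split.
  - apply: (Rmult_le_reg_r (INR n)) => //.
    have -> : (1 - E / INR n) * INR n = INR n - E by field; lra.
    have -> : M * l / INR n * INR n = M * l by field; lra. nra.
  - apply: (Rmult_le_reg_r (INR n)) => //.
    have -> : M * l / INR n * INR n = M * l by field; lra. lra.
have := ln_near1 (1 - E / INR n) (M * l / INR n) ltac:(lra) x1.
move=> h1.
have h1' : Rabs (ln (M * l / INR n)) <= 2 * (E / INR n).
  apply: (Rle_trans _ _ _ h1).
  have -> : (1 - (1 - E / INR n)) / (1 - E / INR n) = (E / INR n) / (1 - E / INR n) by field; lra.
  apply: (Rmult_le_reg_r (1 - E / INR n)); first lra.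
  have -> : E / INR n / (1 - E / INR n) * (1 - E / INR n) = E / INR n by field; lra.
  have : 0 <= E / INR n by apply: Rdiv_le_0_compat; lra.
  nra.
have y1 : 1 <= E / l.
  apply: (Rmult_le_reg_r l); first lra.
  have -> : E / l * l = E by field; lra. lra.
have h2 : Rabs (ln (E / l)) <= / l.
  have := ln_le_sub1 (E / l) ltac:(lra). have : 0 <= ln (E / l) by rewrite -ln_1; apply: ln_le; lra.
  move=> a1 a2. rewrite Rabs_right; last lra.
  have : E / l - 1 <= / l.
    apply: (Rmult_le_reg_r l); first lra.
    have -> : (E / l - 1) * l = E - l by field; lra.
    have -> : / l * l = 1 by field; lra. lra.
  lra.
have := Rabs_triang (ln (M * l / INR n)) (ln (E / l)). lra.
Qed.

Definition Bnd (lam beta : R) (n : nat) : R :=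
  2 * (En lam n / INR n) + 9 / lr lam n + 17 * sqrt (Dn lam beta n ^ 3 / lr lam n)
  + 9 / sqrt (Dn lam beta n)
  + (Rabs (ln (ln (INR n)) / ln (INR n)) + Rabs (Kc lam beta) * Rabs (/ ln (INR n))) / (2 * (1 - lam)).

Lemma main_bound lam beta n : 0 < lam < 1 -> 0 < beta < 1 -> (0 < n)%N -> 1 <= ln (INR n) ->
  64 <= Dn lam beta n -> 64 <= lr lam n -> Dn lam beta n ^ 3 / lr lam n <= 1 ->
  En lam n / INR n <= 1 / 2 -> (1 - lam) * ln (INR n) <= Dn lam beta n ->
  (fl (s_thr lam beta n) < ell lam n)%N /\ 0 < Mn lam n * qn lam beta n /\
  Rabs (ln (Mn lam n * qn lam beta n) - ln (Lb beta)) <= Bnd lam beta n.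
Proof.
move=> hlam hbeta hn ht hD hl he3 he4 hDt.
have hpi := PI_RGT_0.
have [hM P1] := P1_bound lam n hlam hn ltac:(lra) he4.
set t := ln (INR n) in ht hDt P1 *.
set l := lr lam n in hl he3 P1 *.
set D := Dn lam beta n in hD he3 hDt *.
set sg := sqrt l. set dl := sqrt D.
have hsg : sg * sg = l by rewrite /sg sqrt_sqrt; lra.
have hdl : dl * dl = D by rewrite /dl sqrt_sqrt; lra.
have hsg8 : 8 <= sg.
  rewrite /sg. have -> : 8 = sqrt (8 * 8) by rewrite sqrt_square; lra. apply: sqrt_le_1_alt. lra.
have hdl8 : 8 <= dl.
  rewrite /dl. have -> : 8 = sqrt (8 * 8) by rewrite sqrt_square; lra. apply: sqrt_le_1_alt. lra.
have e3s : sqrt (D ^ 3 / l) = dl ^ 3 / sg.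
  have -> : D ^ 3 / l = (dl ^ 3 / sg) ^ 2 by rewrite -hdl -hsg; field; lra.
  rewrite sqrt_pow2 //. apply: Rdiv_le_0_compat; [apply: pow_le|]; lra.
have he3' : dl ^ 3 / sg <= 1.
  rewrite -e3s -sqrt_1. apply: sqrt_le_1_alt. done.
have hdd : dl <= dl ^ 3 / 64.
  have : 64 <= dl * dl by lra. move=> h. have -> : dl ^ 3 = dl * (dl * dl) by ring. nra.
have hds : dl / sg <= 1 / 64.
  have : dl / sg <= dl ^ 3 / 64 / sg.
    apply: Rmult_le_compat_r; [left; apply: Rinv_0_lt_compat; lra | done].
  have -> : dl ^ 3 / 64 / sg = (dl ^ 3 / sg) / 64 by field; lra. lra.
have hds' : dl <= sg / 64.
  have := Rmult_le_compat_r sg _ _ ltac:(lra) hds.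
  have -> : dl / sg * sg = dl by field; lra. lra.
set a := an lam beta n.
have ea : a = sg * dl / 2 by [].
have ha2 : 2 <= a by rewrite ea; nra.
have hc1 : a + 1 + sqrt l <= l / 4.
  rewrite -/sg ea -hsg. nra.
have hc2 : 4 * sqrt l <= a by rewrite -/sg ea; nra.
have ta := tail_asym (ell lam n) a hl ha2 hc1 hc2.
rewrite -/l in ta.
have hs : s_thr lam beta n = l / 2 + a by rewrite s_thr_eq.
have hfl : (fl (s_thr lam beta n) < ell lam n)%N.
  apply/ltP. apply: INR_lt. rewrite -/(lr lam n) -/l.
  have := fl_bounds (s_thr lam beta n) (s_thr_ge0 lam beta n). rewrite hs. have := sqrt_pos l. lra.
split => //.
have eq : qn lam beta n = tailR (ell lam n) (fl (l / 2 + a)).+1 / 2 ^ ell lam n by rewrite /qn hs.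
rewrite -eq in ta.
change (INR (ell lam n)) with l in ta.
set q := qn lam beta n in eq ta *.
set M := Mn lam n in hM P1 *.
have hq : 0 < q.
  have hC : 0 < Rabs (ln q - (- / 2 * ln (PI * l / 2) - 2 * a ^ 2 / l + ln (l / (4 * a)))) + 1 by have := Rabs_pos (ln q - (- / 2 * ln (PI * l / 2) - 2 * a ^ 2 / l + ln (l / (4 * a)))); lra.
  rewrite eq /tailR. apply: Rdiv_lt_0_compat; last by apply: pow_lt; lra.
  (* tail contains the first term, positive *)
  have hk : ((fl (l / 2 + a)).+1 <= ell lam n)%N by rewrite -hs.
  elim: (ell lam n - (fl (l / 2 + a)).+1)%N => [|K IH] /=.
    rewrite addn0. by apply: binR_pos.
  have := pos_INR 'C(ell lam n, (fl (l / 2 + a)).+1 + K.+1). lra.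
have hl0 : 0 < l by lra. have hD0 : 0 < D by lra.
have bid := bracket_id lam beta n hlam hbeta ht hl0 hD0.
rewrite -/t -/l -/D -/a in bid.
have tb : tbound l a <= 8 / l + 17 * (dl ^ 3 / sg) + 9 / dl.
  rewrite /tbound -/sg.
  have hl2 : l ^ 2 = sg ^ 4 by rewrite -hsg; ring.
  have b1 : 12 * (a + 1) ^ 3 / l ^ 2 <= 12 * (dl ^ 3 / sg).
    rewrite hl2. apply: (Rle_trans _ (12 * (2 * a) ^ 3 / sg ^ 4)).
      apply: Rmult_le_compat_r; first (left; apply: Rinv_0_lt_compat; apply: pow_lt; lra).
      apply: Rmult_le_compat_l; first lra. apply: pow_incr; lra.
    right. rewrite ea. field. lra.
  have b2 : 2 * (2 * a + 1) / l <= 3 * (dl ^ 3 / sg).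
    apply: (Rle_trans _ (3 * (dl / sg))).
      rewrite -hsg ea. apply: (Rmult_le_reg_r (sg * sg)); first nra.
      have -> : 2 * (2 * (sg * dl / 2) + 1) / (sg * sg) * (sg * sg) = 2 * (sg * dl + 1) by field; lra.
      have -> : 3 * (dl / sg) * (sg * sg) = 3 * dl * sg by field; lra.
      nra.
    apply: Rmult_le_compat_l; first lra.
    apply: Rmult_le_compat_r; first (left; apply: Rinv_0_lt_compat; lra).
    have : dl ^ 3 = dl * (dl * dl) by ring. nra.
  have b3 : 4 * (sg / a) = 8 / dl by rewrite ea; field; lra.
  have b4 : 2 * (a + 2) / l <= 2 * (dl ^ 3 / sg).
    apply: (Rle_trans _ (2 * (dl / sg))).
      rewrite -hsg ea. apply: (Rmult_le_reg_r (sg * sg)); first nra.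
      have -> : 2 * (sg * dl / 2 + 2) / (sg * sg) * (sg * sg) = sg * dl + 4 by field; lra.
      have -> : 2 * (dl / sg) * (sg * sg) = 2 * dl * sg by field; lra.
      nra.
    apply: Rmult_le_compat_l; first lra.
    apply: Rmult_le_compat_r; first (left; apply: Rinv_0_lt_compat; lra).
    have : dl ^ 3 = dl * (dl * dl) by ring. nra.
  have b5 : 3 / (2 * a) <= 1 / dl.
    rewrite ea. apply: (Rmult_le_reg_r (sg * dl)); first nra.
    have -> : 3 / (2 * (sg * dl / 2)) * (sg * dl) = 3 by field; lra.
    have -> : 1 / dl * (sg * dl) = sg by field; lra. lra.
  lra.
have hDt' : 1 - lam <= D / t.
  apply: (Rmult_le_reg_r t); first lra.
  have -> : D / t * t = D by field; lra. lra.
have p6 : Rabs (/ 2 * ln (2 * (1 - lam)) - / 2 * ln (D / t)) <=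
   (Rabs (ln t / t) + Rabs (Kc lam beta) * Rabs (/ t)) / (2 * (1 - lam)).
  have lb := ln_abs_bound (2 * (1 - lam)) (D / t) ltac:(lra) ltac:(lra).
  have hmin : 1 - lam <= Rmin (2 * (1 - lam)) (D / t) by apply: Rmin_glb; lra.
  have ed : 2 * (1 - lam) - D / t = ln t / t + Kc lam beta * / t.
    rewrite /D /Dn -/t. field. lra.
  rewrite ed in lb.
  have h1 : Rabs (ln t / t + Kc lam beta * / t) <= Rabs (ln t / t) + Rabs (Kc lam beta) * Rabs (/ t).
    rewrite -Rabs_mult. apply: Rabs_triang.
  have hm0 : 0 < Rmin (2 * (1 - lam)) (D / t) by lra.
  have h2 : Rabs (ln t / t + Kc lam beta * / t) / Rmin (2 * (1 - lam)) (D / t)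
        <= (Rabs (ln t / t) + Rabs (Kc lam beta) * Rabs (/ t)) / (1 - lam).
    apply: (Rle_trans _ (Rabs (ln t / t + Kc lam beta * / t) / (1 - lam))).
      apply: Rmult_le_compat_l; first by apply: Rabs_pos.
      apply: Rinv_le_contravar; lra.
    apply: Rmult_le_compat_r; first (left; apply: Rinv_0_lt_compat; lra). done.
  have -> : / 2 * ln (2 * (1 - lam)) - / 2 * ln (D / t) = / 2 * (ln (2 * (1 - lam)) - ln (D / t)) by ring.
  rewrite Rabs_mult Rabs_right; last lra.
  have -> : (Rabs (ln t / t) + Rabs (Kc lam beta) * Rabs (/ t)) / (2 * (1 - lam))
     = / 2 * ((Rabs (ln t / t) + Rabs (Kc lam beta) * Rabs (/ t)) / (1 - lam)) by field; lra.
  apply: Rmult_le_compat_l; lra.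
have eln : ln (M * q) - ln (Lb beta) =
   (ln M - (1 - lam) * t) + (ln q - (- / 2 * ln (PI * l / 2) - 2 * a ^ 2 / l + ln (l / (4 * a))))
   + ((1 - lam) * t + (- / 2 * ln (PI * l / 2) - 2 * a ^ 2 / l + ln (l / (4 * a))) - ln (Lb beta)).
  rewrite ln_mult //. ring.
split; first by apply: Rmult_lt_0_compat.
rewrite eln bid.
rewrite /Bnd -/t -/l -/D -/(En lam n) e3s -/dl.
have u1 := Rabs_triang ((ln M - (1 - lam) * t) + (ln q - (- / 2 * ln (PI * l / 2) - 2 * a ^ 2 / l + ln (l / (4 * a))))) (/ 2 * ln (2 * (1 - lam)) - / 2 * ln (D / t)).
have u2 := Rabs_triang (ln M - (1 - lam) * t) (ln q - (- / 2 * ln (PI * l / 2) - 2 * a ^ 2 / l + ln (l / (4 * a)))).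
have : 9 / l = / l + 8 / l by field; lra.
lra.
Qed.

Lemma cv_abs0 u : Un_cv u 0 -> Un_cv (fun n => Rabs (u n)) 0.
Proof.
move=> h. apply: (cv0_bound _ (fun n => Rabs (u n))).
  exists 0%N => n _. rewrite Rabs_Rabsolu. lra.
move=> eps he. have [N hN] := h eps he. exists N => n hn.
have := hN n hn. rewrite /R_dist !Rminus_0_r Rabs_Rabsolu. done.
Qed.

Lemma cv_shift u l : Un_cv (fun n => u n - l) 0 -> Un_cv u l.
Proof.
move=> h eps he. have [N hN] := h eps he. exists N => n hn.
have := hN n hn. by rewrite /R_dist Rminus_0_r.
Qed.

Lemma cv_shift' u l : Un_cv u l -> Un_cv (fun n => u n - l) 0.
Proof.
move=> h eps he. have [N hN] := h eps he. exists N => n hn.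
have := hN n hn. by rewrite /R_dist Rminus_0_r.
Qed.

Lemma Bnd_cv lam beta : 0 < lam < 1 -> Un_cv (Bnd lam beta) 0.
Proof.
move=> [l0 l1].
have c1 := cv_scal 2 _ (e4_cv lam ltac:(lra)).
have c2 := cv_scal 9 _ (e1_cv lam l0).
have c3 := cv_scal 17 _ (cv_sqrt0 _ (e3_cv lam beta ltac:(lra))).
have c4 := cv_scal 9 _ (e2_cv lam beta ltac:(lra)).
have c5 := cv_abs0 _ e5_cv.
have c6 := cv_scal (Rabs (Kc lam beta)) _ (cv_abs0 _ e6_cv).
have c56 := cv_scal (/ (2 * (1 - lam))) _ (cv_add0 _ _ c5 c6).
have := cv_add0 _ _ (cv_add0 _ _ (cv_add0 _ _ (cv_add0 _ _ c1 c2) c3) c4) c56.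
apply: cv_ev_ext. exists 0%N => n _. rewrite /Bnd /Rdiv. ring.
Qed.

Lemma ev_cond lam beta : 0 < lam < 1 -> ev (fun n =>
  (0 < n)%N /\ 1 <= ln (INR n) /\ 64 <= Dn lam beta n /\ 64 <= lr lam n /\
  Dn lam beta n ^ 3 / lr lam n <= 1 /\ En lam n / INR n <= 1 / 2 /\
  (1 - lam) * ln (INR n) <= Dn lam beta n).
Proof.
move=> [l0 l1].
have h1 := cv_ev_lt _ _ _ (e1_cv lam l0) (Rlt_trans 0 (1/128) (1/64) ltac:(lra) ltac:(lra)).
have h3 := cv_ev_lt _ _ _ (e3_cv lam beta ltac:(lra)) Rlt_0_1.
have h4 := cv_ev_lt _ _ _ (e4_cv lam ltac:(lra)) (Rlt_trans 0 (1/4) (1/2) ltac:(lra) ltac:(lra)).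
eapply (ev_imp (ev_and (ev_and (ev_and ev_t1 (D_inf lam beta 64 ltac:(lra))) (ev_and h1 h3))
   (ev_and h4 (D_lower lam beta ltac:(lra))))) => n [[[[ht hn] hD] [e1 e3]] [e4 hDl]].
cbv beta in e1, e3, e4. rewrite Rminus_0_r in e1. rewrite Rminus_0_r in e3. rewrite Rminus_0_r in e4.
have hlr := lr_lower lam n l0 hn.
have hl0 : 0 < lr lam n by nra.
have hl : 64 <= lr lam n.
  rewrite Rabs_right in e1; last (left; apply: Rinv_0_lt_compat; lra).
  apply: (Rmult_le_reg_r (/ lr lam n)); first by apply: Rinv_0_lt_compat.
  have -> : lr lam n * / lr lam n = 1 by field; lra. lra.
refine (conj hn (conj ht (conj hD (conj hl (conj _ (conj _ hDl)))))).
- have := Rle_abs (Dn lam beta n ^ 3 / lr lam n). lra.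
- have := Rle_abs (En lam n / INR n). lra.
Qed.

Lemma M_inv_bound lam n : 0 <= lam -> (0 < n)%N -> 1 <= lr lam n -> En lam n / INR n <= 1 / 2 ->
  0 < / Mn lam n <= 2 * (En lam n / INR n).
Proof.
move=> l0 hn hl he4.
have [b1 b2] := ell_bounds lam n l0 hn.
have hnR : 0 < INR n by apply: lt_0_INR; apply/ltP; lia.
have hl0 : (0 < ell lam n)%N by apply: INR_le_nat; rewrite -/(lr lam n) /=; lra.
have d2 := ltn_ceil n hl0.
have r2 : INR n < (Mn lam n + 1) * lr lam n.
  have := lt_INR _ _ (elimT ltP d2). by rewrite mult_INR S_INR.
have hE : 0 < En lam n by lra.
have hnE : 2 <= INR n / En lam n.
  apply: (Rmult_le_reg_r (En lam n / INR n)); first by apply: Rdiv_lt_0_compat.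
  have -> : INR n / En lam n * (En lam n / INR n) = 1 by field; lra. lra.
have hM0 := pos_INR (mblk lam n).
have hM : INR n / En lam n < Mn lam n + 1.
  apply: (Rmult_lt_reg_r (En lam n)) => //.
  have -> : INR n / En lam n * En lam n = INR n by field; lra.
  have hM0p : 0 <= Mn lam n by apply: pos_INR. nra.
have hMp : 0 < Mn lam n by lra.
split; first by apply: Rinv_0_lt_compat.
have -> : 2 * (En lam n / INR n) = / (INR n / (2 * En lam n)) by field; lra.
apply: Rinv_le_contravar.
  apply: Rdiv_lt_0_compat; lra.
have : INR n / (2 * En lam n) = (INR n / En lam n) / 2 by field; lra. lra.
Qed.

Theorem lemma2p2 (lam beta : R) :
  (0 < lam < 1)%R -> (0 < beta < 1)%R ->
  Un_cv (fun n : nat => prob_event lam beta n) beta.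
Proof.
move=> hlam hbeta.
have [l0 l1] := hlam. have [b0 b1] := hbeta.
have EV := ev_cond lam beta hlam.
have MB : ev (fun n => (fl (s_thr lam beta n) < ell lam n)%N /\ 0 < Mn lam n * qn lam beta n /\
  Rabs (ln (Mn lam n * qn lam beta n) - ln (Lb beta)) <= Bnd lam beta n).
  eapply (ev_imp EV) => n [hn [ht [hD [hl [he3 [he4 hDt]]]]]].
  exact: main_bound.
have hLb : 0 < Lb beta.
  rewrite /Lb -ln_1. apply: ln_increasing; first lra.
  rewrite -Rinv_1. apply: Rinv_lt_contravar; lra.
have c1 : Un_cv (fun n => ln (Mn lam n * qn lam beta n)) (ln (Lb beta)).
  apply: cv_shift. apply: (cv0_bound _ (Bnd lam beta)); last exact: Bnd_cv.
  eapply (ev_imp MB) => n [_ [_ h]]. done.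
have c2 : Un_cv (fun n => Mn lam n * qn lam beta n) (Lb beta).
  have cexp : continuity_pt exp (ln (Lb beta)).
    apply: derivable_continuous_pt. exists (exp (ln (Lb beta))). exact: derivable_pt_lim_exp.
  have := continuity_seq exp _ _ cexp c1. rewrite exp_ln //.
  apply: cv_ev_ext. eapply (ev_imp MB) => n [_ [h _]]. by rewrite exp_ln.
have c3 : Un_cv (fun n => / Mn lam n) 0.
  apply: (cv0_bound _ (fun n => 2 * (En lam n / INR n))); last exact: (cv_scal 2 _ (e4_cv lam ltac:(lra))).
  eapply (ev_imp EV) => n [hn [ht [hD [hl [he3 [he4 hDt]]]]]].
  have [h1 h2] := M_inv_bound lam n ltac:(lra) hn ltac:(lra) he4.
  rewrite Rabs_right; lra.
have c4 : Un_cv (qn lam beta) 0.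
  have := CV_mult _ _ _ _ c2 c3. rewrite Rmult_0_r.
  apply: cv_ev_ext.
  eapply (ev_imp (ev_and EV MB)) => n [[hn [ht [hD [hl [he3 [he4 hDt]]]]]] [_ [hMq _]]].
  have [h1 h2] := M_inv_bound lam n ltac:(lra) hn ltac:(lra) he4.
  field. have : 0 < Mn lam n by have := Rinv_0_lt_compat _ h1; rewrite Rinv_inv.
  lra.
have hq2 := cv_ev_lt _ _ _ c4 (Rlt_trans 0 (1/4) (1/2) ltac:(lra) ltac:(lra)).
have c5 : Un_cv (fun n => Mn lam n * ln (1 - qn lam beta n) + Mn lam n * qn lam beta n) 0.
  apply: (cv0_bound _ (fun n => 2 * ((Mn lam n * qn lam beta n) * qn lam beta n))).
    eapply (ev_imp (ev_and (ev_and EV MB) hq2)) => n [[[hn [ht [hD [hl [he3 [he4 hDt]]]]]] [_ [hMq _]]] hq].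
    have [h1 h2] := M_inv_bound lam n ltac:(lra) hn ltac:(lra) he4.
    have hM : 0 < Mn lam n by have := Rinv_0_lt_compat _ h1; rewrite Rinv_inv.
    have hq0 : 0 < qn lam beta n.
      apply: (Rmult_lt_reg_l (Mn lam n)) => //. lra.
    rewrite Rminus_0_r Rabs_right in hq; last lra.
    have a1 := ln_1m_lower (qn lam beta n) ltac:(lra).
    have a2 := ln_1m_upper (qn lam beta n) ltac:(lra).
    have -> : Mn lam n * ln (1 - qn lam beta n) + Mn lam n * qn lam beta n
       = Mn lam n * (ln (1 - qn lam beta n) + qn lam beta n) by ring.
    rewrite Rabs_mult Rabs_right; last lra.
    have : Rabs (ln (1 - qn lam beta n) + qn lam beta n) <= 2 * qn lam beta n ^ 2.
      apply: Rabs_le. split; lra.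
    move=> h. have := Rmult_le_compat_l _ _ _ (Rlt_le _ _ hM) h.
    have -> : Mn lam n * (2 * qn lam beta n ^ 2) = 2 * (Mn lam n * qn lam beta n * qn lam beta n) by ring.
    done.
  have := CV_mult _ _ _ _ c2 c4. rewrite Rmult_0_r. move=> h.
  have := cv_scal 2 _ h. done.
have c6 : Un_cv (fun n => Mn lam n * ln (1 - qn lam beta n)) (- Lb beta).
  have := CV_minus _ _ _ _ c5 c2. rewrite Rminus_0_l.
  apply: cv_ev_ext. exists 0%N => n _. ring.
have c7 : Un_cv (fun n => exp (Mn lam n * ln (1 - qn lam beta n))) beta.
  have cexp : continuity_pt exp (- Lb beta).
    apply: derivable_continuous_pt. exists (exp (- Lb beta)). exact: derivable_pt_lim_exp.
  have := continuity_seq exp _ _ cexp c6.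
  have -> : exp (- Lb beta) = beta by rewrite /Lb ln_Rinv // Ropp_involutive exp_ln.
  done.
apply: (cv_ev_ext _ _ _ _ c7).
eapply (ev_imp (ev_and MB hq2)) => n [[hfl [hMq _]] hq].
rewrite (prob_formula lam beta n hfl) -/(qn lam beta n).
rewrite Rminus_0_r in hq. have := Rle_abs (qn lam beta n). move=> hqa.
have hq1 : 0 < 1 - qn lam beta n by lra.
rewrite -{2}(exp_ln _ hq1) exp_pow_nat /Mn. congr exp.
Qed.
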